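(* Let $N\ge2$, $p,q>0$ with $p+q=1$, and let $x_1\le\cdots\le x_N$ and $y_1\le\cdots\le y_N$ be integers. Let $\sigma\in\mathbb{S}_N$ and suppose that some entry $\beta$ appears in position $\beta-1$ of $\sigma$ (i.e. $\sigma(\beta-1)=\beta$) and all entries preceding $\beta$ are less than $\beta$. Then $I(\sigma)=0$, where $$I(\sigma)=\int_{\mathcal{C}_r}\cdots\int_{\mathcal{C}_r}A_\sigma\prod_{i=1}^N\xi_{\sigma(i)}^{\,x_i-y_{\sigma(i)}-1}\,d\xi_1\cdots d\xi_N$$ with $A_\sigma=\prod_{(\beta',\alpha')}S_{\beta'\alpha'}$ over all inversions $(\beta',\alpha')$ of $\sigma$, $S_{\beta'\alpha'}=-\frac{\xi_{\alpha'}}{\xi_{\beta'}}\cdot\frac{p+q\xi_{\alpha'}\xi_{\beta'}-\xi_{\beta'}}{p+q\xi_{\alpha'}\xi_{\beta'}-\xi_{\alpha'}}$ (the AZRP $S$-matrix), and $\mathcal{C}_r$ a circle centered at $0$ of sufficiently small radius $r$ that all poles of the integrand other than $0$ lie outside it.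
   Context: Permutations are in one-line notation $\sigma(1)\cdots\sigma(N)$; an inversion $(b,a)$ is a pair of entries with $b>a$ and $b$ to the left of $a$ in $\sigma$. Each $d\xi_j$ includes the factor $\frac{1}{2\pi i}$. *)

(* Defs.v *)
From Stdlib Require Import Reals ZArith.
From Coquelicot Require Import Coquelicot.
From mathcomp Require Import ssreflect ssrfun ssrbool eqtype ssrnat seq fintype fingroup perm.

Set Implicit Arguments.
Unset Strict Implicit.
Unset Printing Implicit Defensive.

Open Scope R_scope.

Fixpoint Cpow (z : C) (n : nat) : C :=
  match n with O => RtoC 1 | S n' => Cmult z (Cpow z n') end.

Definition Cpowz (z : C) (k : Z) : C :=
  match k with
  | Z0 => RtoC 1
  | Zpos m => Cpow z (Pos.to_nat m)
  | Zneg m => Cinv (Cpow z (Pos.to_nat m))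
  end.

Definition Cprod (l : seq C) : C := foldr Cmult (RtoC 1) l.

(* (1/(2 pi i)) \oint_{|z| = r} f(z) dz, counterclockwise, parametrised by
   z = r e^{i t}, dz = i r e^{i t} dt, t in [0, 2 pi]. *)
Definition circle_int (r : R) (f : C -> C) : C :=
  Cdiv (RInt (V := C_R_CompleteNormedModule)
          (fun t => Cmult (f (r * cos t, r * sin t)%R) (- r * sin t, r * cos t)%R)
          0 (2 * PI))
       (0, 2 * PI)%R.

Definition upd (xi : nat -> C) (k : nat) (z : C) : nat -> C :=
  fun j => if j == k then z else xi j.

(* iterated integral over the variables listed (first = outermost) *)
Fixpoint circ_iter (r : R) (vars : seq nat) (F : (nat -> C) -> C) (xi : nat -> C) : C :=
  match vars with
  | [::] => F xi
  | v :: vs => circle_int r (fun z => circ_iter r vs F (upd xi v z))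
  end.

(* Indices are 0-based: variable xi_k (k = 0..N-1) stands for the paper's xi_{k+1};
   a permutation s : 'S_N in one-line notation has entry s i at position i. *)

Definition Smat (p q : R) (xi : nat -> C) (b a : nat) : C :=
  let xa := xi a in let xb := xi b in
  Cmult (Copp (Cdiv xa xb))
        (Cdiv (Cplus (RtoC p) (Cminus (Cmult (RtoC q) (Cmult xa xb)) xb))
              (Cplus (RtoC p) (Cminus (Cmult (RtoC q) (Cmult xa xb)) xa))).

Definition inv_pos (N : nat) (s : 'S_N) : seq ('I_N * 'I_N) :=
  [seq ij <- [seq (i, j) | i <- enum 'I_N, j <- enum 'I_N]
     | ((ij : 'I_N * 'I_N).1 < ij.2)%N && (s ij.2 < s ij.1)%N].

Definition Asig (N : nat) (p q : R) (s : 'S_N) (xi : nat -> C) : C :=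
  Cprod [seq Smat p q xi (s ij.1) (s ij.2) | ij : 'I_N * 'I_N <- inv_pos s].

Definition integrand (N : nat) (p q : R) (x y : 'I_N -> Z) (s : 'S_N)
    (xi : nat -> C) : C :=
  Cmult (Asig p q s xi)
        (Cprod [seq Cpowz (xi (s i)) (x i - y (s i) - 1)%Z | i <- enum 'I_N]).

(* I(sigma) with contour C_r; d xi_1 innermost, d xi_N outermost *)
Definition Isig (N : nat) (p q : R) (x y : 'I_N -> Z) (s : 'S_N) (r : R) : C :=
  circ_iter r (rev (iota 0 N)) (integrand p q x y s) (fun _ => RtoC 0).

(* Main.v *)
Require Import Defs.
From Stdlib Require Import Reals ZArith Lra Lia FunctionalExtensionality.
From Coquelicot Require Import Coquelicot.
From mathcomp Require Import ssreflect ssrfun ssrbool eqtype ssrnat seq fintype fingroup perm.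
From mathcomp Require Import zify.
Import Defs.
Open Scope R_scope.

Definition Ep (r t : R) : C := (r * cos t, r * sin t).
Definition Ed (r t : R) : C := (- r * sin t, r * cos t).

Lemma circle_int_E r f : circle_int r f =
  Cdiv (RInt (V := C_R_CompleteNormedModule) (fun t => Cmult (f (Ep r t)) (Ed r t)) 0 (2*PI)) (0, 2*PI).
Proof. reflexivity. Qed.

Definition ContF (F : R -> C) := forall t, continuity_pt (fun t => fst (F t)) t /\ continuity_pt (fun t => snd (F t)) t.

Lemma RInt_C_eq (F : R -> C) a b : ContF F ->
  RInt (V := C_R_CompleteNormedModule) F a b =
  (RInt (fun t => fst (F t)) a b, RInt (fun t => snd (F t)) a b).
Proof.
intros H. apply is_RInt_unique.
apply (is_RInt_fct_extend_pair (U := R_NormedModule) (V := R_NormedModule)).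
- apply (RInt_correct (V := R_CompleteNormedModule)). apply ex_RInt_continuous. intros z _.
  apply continuity_pt_filterlim. apply H.
- apply (RInt_correct (V := R_CompleteNormedModule)). apply ex_RInt_continuous. intros z _.
  apply continuity_pt_filterlim. apply H.
Qed.

Definition exR (f : R -> R) := forall a b, ex_RInt f a b.

Lemma exR_cont f : (forall t, continuity_pt f t) -> exR f.
Proof. intros H a b. apply (ex_RInt_continuous (V := R_CompleteNormedModule)). intros z _. apply continuity_pt_filterlim. apply H. Qed.

Lemma RInt_lin2 (a b : R) f g x y : exR f -> exR g ->
  RInt (fun t => a * f t + b * g t) x y = a * RInt f x y + b * RInt g x y.
Proof.
intros Hf Hg.
have E1 : RInt (fun t => a * f t + b * g t) x y = RInt (V := R_CompleteNormedModule) (fun t => plus (scal a (f t)) (scal b (g t))) x y by reflexivity.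
rewrite E1 (RInt_plus (V := R_CompleteNormedModule)).
- rewrite (RInt_scal (V := R_CompleteNormedModule)); [|apply Hf].
  rewrite (RInt_scal (V := R_CompleteNormedModule)); [|apply Hg]. reflexivity.
- apply (ex_RInt_scal (V := R_CompleteNormedModule)). apply Hf.
- apply (ex_RInt_scal (V := R_CompleteNormedModule)). apply Hg.
Qed.

Lemma cpt_plus f g x : continuity_pt f x -> continuity_pt g x -> continuity_pt (fun t => f t + g t) x.
Proof. intros; exact (continuity_pt_plus f g x H H0). Qed.
Lemma cpt_minus f g x : continuity_pt f x -> continuity_pt g x -> continuity_pt (fun t => f t - g t) x.
Proof. intros; exact (continuity_pt_minus f g x H H0). Qed.
Lemma cpt_mult f g x : continuity_pt f x -> continuity_pt g x -> continuity_pt (fun t => f t * g t) x.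
Proof. intros; exact (continuity_pt_mult f g x H H0). Qed.
Lemma cpt_const c x : continuity_pt (fun _ => c) x.
Proof. apply continuity_pt_const. intros ? ?; reflexivity. Qed.

Lemma RInt_extR (f g : R -> R) a b : (forall x, f x = g x) -> RInt f a b = RInt g a b.
Proof. intros H. apply RInt_ext. intros; apply H. Qed.

Definition Integ r (f : C -> C) := fun t => Cmult (f (Ep r t)) (Ed r t).
Definition ContC r (f : C -> C) := ContF (fun t => f (Ep r t)).

Lemma ContF_mult {F G} : ContF F -> ContF G -> ContF (fun t => Cmult (F t) (G t)).
Proof.
intros HF HG t. destruct (HF t) as [F1 F2]. destruct (HG t) as [G1 G2]. cbn [fst snd Cmult Cplus]. split.
- apply cpt_minus; apply cpt_mult; assumption.
- apply cpt_plus; apply cpt_mult; assumption.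
Qed.

Lemma ContF_plus {F G} : ContF F -> ContF G -> ContF (fun t => Cplus (F t) (G t)).
Proof.
intros HF HG t. destruct (HF t) as [F1 F2]. destruct (HG t) as [G1 G2]. cbn [fst snd Cmult Cplus]. split;
apply cpt_plus; assumption.
Qed.

Lemma ContF_const c : ContF (fun _ => c).
Proof. intros t; split; apply cpt_const. Qed.

Lemma ContF_Ed r : ContF (Ed r).
Proof.
intros t; unfold Ed; cbn [fst snd]; split.
- apply cpt_mult. apply cpt_const. apply continuity_sin.
- apply cpt_mult. apply cpt_const. apply continuity_cos.
Qed.

Lemma ContF_Ep r : ContF (Ep r).
Proof.
intros t; unfold Ep; cbn [fst snd]; split.
- apply cpt_mult. apply cpt_const. apply continuity_cos.
- apply cpt_mult. apply cpt_const. apply continuity_sin.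
Qed.

Lemma ContF_Integ {r f} : ContC r f -> ContF (Integ r f).
Proof. intros H. apply ContF_mult. apply H. apply ContF_Ed. Qed.

Lemma exR_fst {F} : ContF F -> exR (fun t => fst (F t)).
Proof. intros H. apply exR_cont. apply H. Qed.
Lemma exR_snd {F} : ContF F -> exR (fun t => snd (F t)).
Proof. intros H. apply exR_cont. apply H. Qed.

Lemma ci_eq {r f} : ContC r f -> circle_int r f =
  Cdiv (RInt (fun t => fst (Integ r f t)) 0 (2*PI), RInt (fun t => snd (Integ r f t)) 0 (2*PI)) (0, 2*PI).
Proof. intros H. rewrite circle_int_E. rewrite RInt_C_eq. reflexivity. apply ContF_Integ, H. Qed.

Lemma Cdiv_plus (a b c : C) : Cdiv (Cplus a b) c = Cplus (Cdiv a c) (Cdiv b c).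
Proof. unfold Cdiv. ring. Qed.
Lemma Cmult_Cdiv (a b c : C) : Cdiv (Cmult a b) c = Cmult a (Cdiv b c).
Proof. unfold Cdiv. ring. Qed.

Lemma ci_plus r f g : ContC r f -> ContC r g ->
  circle_int r (fun z => Cplus (f z) (g z)) = Cplus (circle_int r f) (circle_int r g).
Proof.
intros Hf Hg.
rewrite (ci_eq Hf) (ci_eq Hg) ci_eq.
2:{ intros t. apply (ContF_plus Hf Hg). }
have Ef := ContF_Integ Hf. have Eg := ContF_Integ Hg.
have -> : RInt (fun t => fst (Integ r (fun z => Cplus (f z) (g z)) t)) 0 (2*PI)
  = 1 * RInt (fun t => fst (Integ r f t)) 0 (2*PI) + 1 * RInt (fun t => fst (Integ r g t)) 0 (2*PI).
{ rewrite -RInt_lin2; [|apply exR_fst, Ef|apply exR_fst, Eg]. apply RInt_extR. intros t.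
  unfold Integ; cbn [fst snd Cmult Cplus]; ring. }
have -> : RInt (fun t => snd (Integ r (fun z => Cplus (f z) (g z)) t)) 0 (2*PI)
  = 1 * RInt (fun t => snd (Integ r f t)) 0 (2*PI) + 1 * RInt (fun t => snd (Integ r g t)) 0 (2*PI).
{ rewrite -RInt_lin2; [|apply exR_snd, Ef|apply exR_snd, Eg]. apply RInt_extR. intros t.
  unfold Integ; cbn [fst snd Cmult Cplus]; ring. }
rewrite !Rmult_1_l -Cdiv_plus. reflexivity.
Qed.

Lemma ci_scal r c f : ContC r f ->
  circle_int r (fun z => Cmult c (f z)) = Cmult c (circle_int r f).
Proof.
intros Hf.
have Hcf : ContC r (fun z => Cmult c (f z)).
{ intros t. apply (ContF_mult (ContF_const c) Hf). }
rewrite (ci_eq Hf) (ci_eq Hcf).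
have Ef := ContF_Integ Hf.
destruct c as [c1 c2].
have -> : RInt (fun t => fst (Integ r (fun z => Cmult (c1, c2) (f z)) t)) 0 (2*PI)
  = c1 * RInt (fun t => fst (Integ r f t)) 0 (2*PI) + (- c2) * RInt (fun t => snd (Integ r f t)) 0 (2*PI).
{ rewrite -RInt_lin2; [|apply exR_fst, Ef|apply exR_snd, Ef]. apply RInt_extR. intros t.
  unfold Integ; cbn [fst snd Cmult Cplus]; ring. }
have -> : RInt (fun t => snd (Integ r (fun z => Cmult (c1, c2) (f z)) t)) 0 (2*PI)
  = c2 * RInt (fun t => fst (Integ r f t)) 0 (2*PI) + c1 * RInt (fun t => snd (Integ r f t)) 0 (2*PI).
{ rewrite -RInt_lin2; [|apply exR_fst, Ef|apply exR_snd, Ef]. apply RInt_extR. intros t.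
  unfold Integ; cbn [fst snd Cmult Cplus]; ring. }
set A := RInt (fun t => fst (Integ r f t)) 0 (2*PI).
set B := RInt (fun t => snd (Integ r f t)) 0 (2*PI).
rewrite -Cmult_Cdiv. unfold Cmult; cbn [fst snd]. f_equal. f_equal; ring.
Qed.
Lemma cos_int_2PI (k : Z) : cos (IZR k * (2*PI)) = 1.
Proof.
destruct k as [|p|p].
- rewrite Rmult_0_l; apply cos_0.
- rewrite <- positive_nat_Z, <- INR_IZR_INZ.
  replace (INR (Pos.to_nat p) * (2 * PI)) with (0 + 2 * INR (Pos.to_nat p) * PI) by ring.
  rewrite cos_period; apply cos_0.
- rewrite <- Pos2Z.opp_pos, opp_IZR, <- positive_nat_Z, <- INR_IZR_INZ.
  replace (- INR (Pos.to_nat p) * (2 * PI)) with (- (0 + 2 * INR (Pos.to_nat p) * PI)) by ring.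
  rewrite cos_neg cos_period; apply cos_0.
Qed.

Lemma sin_int_2PI (k : Z) : sin (IZR k * (2*PI)) = 0.
Proof.
destruct k as [|p|p].
- rewrite Rmult_0_l; apply sin_0.
- rewrite <- positive_nat_Z, <- INR_IZR_INZ.
  replace (INR (Pos.to_nat p) * (2 * PI)) with (0 + 2 * INR (Pos.to_nat p) * PI) by ring.
  rewrite sin_period; apply sin_0.
- rewrite <- Pos2Z.opp_pos, opp_IZR, <- positive_nat_Z, <- INR_IZR_INZ.
  replace (- INR (Pos.to_nat p) * (2 * PI)) with (- (0 + 2 * INR (Pos.to_nat p) * PI)) by ring.
  rewrite sin_neg sin_period sin_0; ring.
Qed.

Lemma RInt_sin_m (k : Z) K : k <> 0%Z ->
  RInt (fun t => K * sin (IZR k * t)) 0 (2*PI) = 0.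
Proof.
intros Hk. have Hm : IZR k <> 0 by apply not_0_IZR.
apply is_RInt_unique.
have HI : is_RInt (fun t => K * sin (IZR k * t)) 0 (2*PI) (minus ((fun t => - K * cos (IZR k * t) / IZR k) (2*PI)) ((fun t => - K * cos (IZR k * t) / IZR k) 0)).
{ apply (is_RInt_derive (V := R_CompleteNormedModule) (fun t => - K * cos (IZR k * t) / IZR k)).
- intros x _. auto_derive. trivial. field. exact Hm.
- intros x _. apply continuity_pt_filterlim.
  apply continuity_pt_mult. apply continuity_pt_const; intros ? ?; reflexivity.
  apply (continuity_pt_comp (fun t => IZR k * t) sin). apply continuity_pt_mult.
  apply continuity_pt_const; intros ? ?; reflexivity. apply continuity_pt_id. apply continuity_sin. }
have E : minus ((fun t => - K * cos (IZR k * t) / IZR k) (2*PI)) ((fun t => - K * cos (IZR k * t) / IZR k) 0) = 0.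
{ cbv beta. rewrite (cos_int_2PI k) !Rmult_0_r cos_0. rewrite /minus /plus /opp /=. field. exact Hm. }
rewrite E in HI. exact HI.
Qed.

Lemma RInt_cos_m (k : Z) K : k <> 0%Z ->
  RInt (fun t => K * cos (IZR k * t)) 0 (2*PI) = 0.
Proof.
intros Hk. have Hm : IZR k <> 0 by apply not_0_IZR.
apply is_RInt_unique.
have HI : is_RInt (fun t => K * cos (IZR k * t)) 0 (2*PI) (minus ((fun t => K * sin (IZR k * t) / IZR k) (2*PI)) ((fun t => K * sin (IZR k * t) / IZR k) 0)).
{ apply (is_RInt_derive (V := R_CompleteNormedModule) (fun t => K * sin (IZR k * t) / IZR k)).
- intros x _. auto_derive. trivial. field. exact Hm.
- intros x _. apply continuity_pt_filterlim.
  apply continuity_pt_mult. apply continuity_pt_const; intros ? ?; reflexivity.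
  apply (continuity_pt_comp (fun t => IZR k * t) cos). apply continuity_pt_mult.
  apply continuity_pt_const; intros ? ?; reflexivity. apply continuity_pt_id. apply continuity_cos. }
have E : minus ((fun t => K * sin (IZR k * t) / IZR k) (2*PI)) ((fun t => K * sin (IZR k * t) / IZR k) 0) = 0.
{ cbv beta. rewrite (sin_int_2PI k) !Rmult_0_r sin_0. rewrite /minus /plus /opp /=. field. exact Hm. }
rewrite E in HI. exact HI.
Qed.

Lemma Cpow_Ep r t n : Cpow (Ep r t) n = (r^n * cos (INR n * t), r^n * sin (INR n * t)).
Proof.
induction n as [|n IH].
- cbn [Cpow]. rewrite Rmult_0_l cos_0 sin_0. unfold RtoC. f_equal; ring.
- cbn [Cpow]. rewrite IH S_INR. unfold Ep, Cmult; cbn [fst snd].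
  replace ((INR n + 1) * t) with (INR n * t + t) by ring.
  rewrite cos_plus sin_plus. cbn [pow]. f_equal; ring.
Qed.

Lemma Cpowz_Ep r t e : 0 < r ->
  Cpowz (Ep r t) e = (powerRZ r e * cos (IZR e * t), powerRZ r e * sin (IZR e * t)).
Proof.
intros hr. destruct e as [|p|p]; cbn [Cpowz powerRZ].
- rewrite Rmult_0_l cos_0 sin_0. unfold RtoC. f_equal; ring.
- rewrite Cpow_Ep. rewrite <- positive_nat_Z, <- INR_IZR_INZ. reflexivity.
- rewrite Cpow_Ep. rewrite <- Pos2Z.opp_pos, opp_IZR, <- positive_nat_Z, <- INR_IZR_INZ.
  rewrite -Ropp_mult_distr_l. set n := Pos.to_nat p. set a := INR n * t.
  have ha : r ^ n <> 0 by apply pow_nonzero; lra.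
  have H1 := sin2_cos2 a. unfold Rsqr in H1.
  unfold Cinv; cbn [fst snd]. rewrite cos_neg sin_neg.
  f_equal.
  + have -> : (r ^ n * cos a) ^ 2 + (r ^ n * sin a) ^ 2 = (r^n)^2 by (replace ((r ^ n * cos a) ^ 2 + (r ^ n * sin a) ^ 2) with ((r^n)^2 * (sin a * sin a + cos a * cos a)) by ring; rewrite H1; ring).
    field. exact ha.
  + have -> : (r ^ n * cos a) ^ 2 + (r ^ n * sin a) ^ 2 = (r^n)^2 by (replace ((r ^ n * cos a) ^ 2 + (r ^ n * sin a) ^ 2) with ((r^n)^2 * (sin a * sin a + cos a * cos a)) by ring; rewrite H1; ring).
    field. exact ha.
Qed.

Lemma cpt_cos_lin k K x : continuity_pt (fun t => K * cos (k * t)) x.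
Proof.
apply cpt_mult. apply cpt_const.
apply (continuity_pt_comp (fun t => k * t) cos). apply cpt_mult. apply cpt_const.
apply continuity_pt_id. apply continuity_cos.
Qed.
Lemma cpt_sin_lin k K x : continuity_pt (fun t => K * sin (k * t)) x.
Proof.
apply cpt_mult. apply cpt_const.
apply (continuity_pt_comp (fun t => k * t) sin). apply cpt_mult. apply cpt_const.
apply continuity_pt_id. apply continuity_sin.
Qed.

Lemma ContC_Cpowz r e : 0 < r -> ContC r (fun z => Cpowz z e).
Proof.
intros hr. unfold ContC.
have -> : (fun t => Cpowz (Ep r t) e) = (fun t => (powerRZ r e * cos (IZR e * t), powerRZ r e * sin (IZR e * t))).
{ apply functional_extensionality => t. apply Cpowz_Ep, hr. }
intros t; cbn [fst snd]; split. apply cpt_cos_lin. apply cpt_sin_lin.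
Qed.

Lemma ci_Cpowz r e : 0 < r -> e <> (-1)%Z -> circle_int r (fun z => Cpowz z e) = RtoC 0.
Proof.
intros hr he.
rewrite (ci_eq (ContC_Cpowz r e hr)).
have he1 : (e + 1 <> 0)%Z by lia.
set K := powerRZ r e * r.
have -> : RInt (fun t => fst (Integ r (fun z => Cpowz z e) t)) 0 (2*PI) = RInt (fun t => (-K) * sin (IZR (e+1) * t)) 0 (2*PI).
{ apply RInt_extR => t. unfold Integ. rewrite Cpowz_Ep //. unfold Ed, Cmult; cbn [fst snd].
  rewrite plus_IZR. replace ((IZR e + 1) * t) with (IZR e * t + t) by ring. rewrite sin_plus /K. ring. }
have -> : RInt (fun t => snd (Integ r (fun z => Cpowz z e) t)) 0 (2*PI) = RInt (fun t => K * cos (IZR (e+1) * t)) 0 (2*PI).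
{ apply RInt_extR => t. unfold Integ. rewrite Cpowz_Ep //. unfold Ed, Cmult; cbn [fst snd].
  rewrite plus_IZR. replace ((IZR e + 1) * t) with (IZR e * t + t) by ring. rewrite cos_plus /K. ring. }
rewrite RInt_sin_m // RInt_cos_m //.
unfold Cdiv. rewrite Cmult_0_l. reflexivity.
Qed.

Lemma Cmod_Ep r t : 0 <= r -> Cmod (Ep r t) = r.
Proof.
intros hr. unfold Cmod, Ep; cbn [fst snd].
have H1 := sin2_cos2 t. unfold Rsqr in H1.
replace ((r * cos t) ^ 2 + (r * sin t) ^ 2) with (r ^ 2 * (sin t * sin t + cos t * cos t)) by ring.
rewrite H1 Rmult_1_r. apply sqrt_pow2, hr.
Qed.

Lemma Cmod_Ed r t : 0 <= r -> Cmod (Ed r t) = r.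
Proof.
intros hr. unfold Cmod, Ed; cbn [fst snd].
have H1 := sin2_cos2 t. unfold Rsqr in H1.
replace ((- r * sin t) ^ 2 + (r * cos t) ^ 2) with (r ^ 2 * (sin t * sin t + cos t * cos t)) by ring.
rewrite H1 Rmult_1_r. apply sqrt_pow2, hr.
Qed.

Lemma ci_ext r f g : 0 <= r -> (forall z, Cmod z = r -> f z = g z) -> circle_int r f = circle_int r g.
Proof.
intros hr H. rewrite !circle_int_E. f_equal. f_equal.
apply functional_extensionality => t. rewrite H //. apply Cmod_Ep, hr.
Qed.

Lemma ci_zero r : circle_int r (fun _ => RtoC 0) = RtoC 0.
Proof.
have Hc : ContC r (fun _ => RtoC 0) by intros t; apply ContF_const.
rewrite (ci_eq Hc).
have -> : RInt (fun t => fst (Integ r (fun _ => RtoC 0) t)) 0 (2*PI) = RInt (fun t => 0 * sin (IZR 1 * t)) 0 (2*PI).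
{ apply RInt_extR => t. unfold Integ, Cmult, RtoC; cbn [fst snd]. ring. }
have -> : RInt (fun t => snd (Integ r (fun _ => RtoC 0) t)) 0 (2*PI) = RInt (fun t => 0 * sin (IZR 1 * t)) 0 (2*PI).
{ apply RInt_extR => t. unfold Integ, Cmult, RtoC; cbn [fst snd]. ring. }
rewrite RInt_sin_m //. unfold Cdiv. rewrite Cmult_0_l. reflexivity.
Qed.

Lemma ci_zero_on r f : 0 <= r -> (forall z, Cmod z = r -> f z = RtoC 0) -> circle_int r f = RtoC 0.
Proof. intros hr H. rewrite (@ci_ext r f (fun _ => RtoC 0) hr H). apply ci_zero. Qed.

Lemma Rabs_fst_le (z : C) : Rabs (fst z) <= Cmod z.
Proof. have := Rmax_Cmod z. have := Rmax_l (Rabs (fst z)) (Rabs (snd z)). lra. Qed.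
Lemma Rabs_snd_le (z : C) : Rabs (snd z) <= Cmod z.
Proof. have := Rmax_Cmod z. have := Rmax_r (Rabs (fst z)) (Rabs (snd z)). lra. Qed.

Lemma Cmod_pair_le (a b : R) : Cmod (a, b) <= Rabs a + Rabs b.
Proof.
have -> : ((a, b) : C) = Cplus (RtoC a) (Cmult Ci (RtoC b)) by (unfold Cplus, Cmult, Ci, RtoC; cbn [fst snd]; f_equal; ring).
eapply Rle_trans. apply Cmod_triangle. rewrite Cmod_mult Cmod_Ci !Cmod_R. lra.
Qed.

Lemma ci_bound r f B : 0 <= r -> ContC r f -> (forall z, Cmod z = r -> Cmod (f z) <= B) ->
  Cmod (circle_int r f) <= 2 * r * B.
Proof.
intros hr Hc HB.
have HB' : forall t, Cmod (Integ r f t) <= r * B.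
{ intros t. unfold Integ. rewrite Cmod_mult Cmod_Ed //.
  have := HB (Ep r t) (Cmod_Ep r t hr). have := Cmod_ge_0 (f (Ep r t)). nra. }
have HPI := PI_RGT_0.
rewrite (ci_eq Hc).
have E1 : Rabs (RInt (fun t => fst (Integ r f t)) 0 (2*PI)) <= (2*PI - 0) * (r * B).
{ apply abs_RInt_le_const. lra. apply exR_fst, ContF_Integ, Hc.
  intros t _. eapply Rle_trans. apply Rabs_fst_le. apply HB'. }
have E2 : Rabs (RInt (fun t => snd (Integ r f t)) 0 (2*PI)) <= (2*PI - 0) * (r * B).
{ apply abs_RInt_le_const. lra. apply exR_snd, ContF_Integ, Hc.
  intros t _. eapply Rle_trans. apply Rabs_snd_le. apply HB'. }
rewrite Cmod_div.
2:{ intros E. injection E. lra. }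
have -> : Cmod (0, 2*PI) = 2 * PI.
{ unfold Cmod; cbn [fst snd]. replace (0 ^ 2 + (2 * PI) ^ 2) with ((2*PI)^2) by ring. apply sqrt_pow2. lra. }
apply Rmult_le_reg_r with (2*PI). lra.
unfold Rdiv. rewrite Rmult_assoc Rinv_l. 2: lra. rewrite Rmult_1_r.
eapply Rle_trans. apply Cmod_pair_le. nra.
Qed.

Definition Dom (N : nat) (r : R) (xi : nat -> C) := forall j, (j < N)%N -> Cmod (xi j) = r.

Fixpoint dist (n : nat) (xi xi' : nat -> C) : R :=
  match n with O => 0 | S n => Cmod (Cminus (xi n) (xi' n)) + dist n xi xi' end.

Definition Good N r (G : (nat -> C) -> C) := exists B L, 0 <= L /\ forall xi xi', Dom N r xi -> Dom N r xi' ->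
  Cmod (G xi) <= B /\ Cmod (Cminus (G xi) (G xi')) <= L * dist N xi xi'.

Lemma dist_ge0 n xi xi' : 0 <= dist n xi xi'.
Proof. induction n; cbn [dist]. lra. have := Cmod_ge_0 (Cminus (xi n) (xi' n)). lra. Qed.

Lemma dist_coord n xi xi' j : (j < n)%N -> Cmod (Cminus (xi j) (xi' j)) <= dist n xi xi'.
Proof.
induction n as [|n IH]; first by [].
intros Hj. cbn [dist]. rewrite ltnS leq_eqVlt in Hj. case/orP: Hj => [/eqP ->|Hj].
- have := dist_ge0 n xi xi'. lra.
- have := IH Hj. have := Cmod_ge_0 (Cminus (xi n) (xi' n)). lra.
Qed.

Lemma upd_same xi k z : upd xi k z k = z.
Proof. by rewrite /upd eqxx. Qed.
Lemma upd_other xi k z j : j <> k -> upd xi k z j = xi j.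
Proof. move=> H. rewrite /upd. by case: eqP. Qed.

Lemma dist_upd_same n xi xi' v z : dist n (upd xi v z) (upd xi' v z) <= dist n xi xi'.
Proof.
induction n as [|n IH]; cbn [dist]. lra.
rewrite /upd. case: (n == v).
- have -> : Cminus z z = RtoC 0 by unfold Cminus; ring.
  rewrite Cmod_0. have := Cmod_ge_0 (Cminus (xi n) (xi' n)). unfold upd in IH. lra.
- unfold upd in IH. lra.
Qed.

Lemma orP_dec v n : (v < n)%N \/ (n <= v)%N.
Proof. case: (ltnP v n); auto. Qed.

Lemma dist_upd_var n xi v z w : dist n (upd xi v z) (upd xi v w) <= Cmod (Cminus z w).
Proof.
have H : forall n, (v < n)%N \/ (n <= v)%N -> dist n (upd xi v z) (upd xi v w) <= (if (v < n)%N then Cmod (Cminus z w) else 0).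
{ clear n. induction n as [|n IH]; cbn [dist]. move=> _; simpl; lra.
  move=> _. rewrite /upd. case: eqP => [E|E].
  - subst n. rewrite ltnSn.
    have : dist v (upd xi v z) (upd xi v w) <= 0.
    { have := IH (or_intror (leqnn v)). by rewrite ltnn. }
    rewrite /upd. lra.
  - have -> : Cminus (xi n) (xi n) = RtoC 0 by unfold Cminus; ring.
    rewrite Cmod_0.
    have Hn : (v < n.+1)%N = (v < n)%N.
    { rewrite ltnS leq_eqVlt. case: (ltngtP v n) => //= Hc. subst v. by case: E. }
    rewrite Hn. have := IH (orP_dec v n). rewrite /upd. lra. }
have := H n (orP_dec v n). case: (v < n)%N => //. have := Cmod_ge_0 (Cminus z w). lra.
Qed.

Lemma cpt_squeeze h g t0 L : continuity_pt g t0 -> g t0 = 0 ->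
  (forall s, Rabs (h s - h t0) <= L * g s) -> continuity_pt h t0.
Proof.
intros Hg Hg0 H.
intros eps heps.
have HL : 0 <= Rabs L by apply Rabs_pos.
destruct (Hg (eps / (Rabs L + 1))) as [alp [halp Ha]].
{ apply Rdiv_lt_0_compat; lra. }
exists alp. split; first exact halp.
intros x Hx. have := Ha x Hx. rewrite /dist /= /R_dist Hg0 Rminus_0_r.
intros Hgx. have := H x. have := Rle_abs (g x).
have : L * g x <= Rabs L * Rabs (g x).
{ rewrite -Rabs_mult. apply Rle_abs. }
have : Rabs L * Rabs (g x) <= Rabs L * (eps / (Rabs L + 1)).
{ apply Rmult_le_compat_l; lra. }
have : Rabs L * (eps / (Rabs L + 1)) < eps.
{ apply Rmult_lt_reg_r with (Rabs L + 1). lra. field_simplify; lra. }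
lra.
Qed.

Lemma Cmod_sub_fst (a b : C) : Rabs (fst a - fst b) <= Cmod (Cminus a b).
Proof. have -> : fst a - fst b = fst (Cminus a b) by reflexivity. apply Rabs_fst_le. Qed.
Lemma Cmod_sub_snd (a b : C) : Rabs (snd a - snd b) <= Cmod (Cminus a b).
Proof. have -> : snd a - snd b = snd (Cminus a b) by reflexivity. apply Rabs_snd_le. Qed.

Lemma cpt_Ep_dist r t0 : continuity_pt (fun s => Cmod (Cminus (Ep r s) (Ep r t0))) t0.
Proof.
unfold Cmod, Ep, Cminus, Cplus, Copp; cbn [fst snd].
apply (continuity_pt_comp (fun s => (r * cos s + - (r * cos t0)) ^ 2 + (r * sin s + - (r * sin t0)) ^ 2) sqrt).
- apply cpt_plus.
  + apply (continuity_pt_comp (fun s => r * cos s + - (r * cos t0)) (fun x => x ^ 2)).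
    apply cpt_plus. apply cpt_mult. apply cpt_const. apply continuity_cos. apply cpt_const.
    apply derivable_continuous_pt. apply derivable_pt_pow.
  + apply (continuity_pt_comp (fun s => r * sin s + - (r * sin t0)) (fun x => x ^ 2)).
    apply cpt_plus. apply cpt_mult. apply cpt_const. apply continuity_sin. apply cpt_const.
    apply derivable_continuous_pt. apply derivable_pt_pow.
- apply continuity_pt_sqrt. nra.
Qed.

Lemma Lip_ContC r f L : (forall s t, Cmod (Cminus (f (Ep r s)) (f (Ep r t))) <= L * Cmod (Cminus (Ep r s) (Ep r t))) -> ContC r f.
Proof.
intros H t0. split.
- apply (@cpt_squeeze _ (fun s => Cmod (Cminus (Ep r s) (Ep r t0))) t0 L).
  + apply cpt_Ep_dist.
  + have -> : Cminus (Ep r t0) (Ep r t0) = RtoC 0 by unfold Cminus; ring. apply Cmod_0.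
  + intros s. eapply Rle_trans. apply Cmod_sub_fst. apply H.
- apply (@cpt_squeeze _ (fun s => Cmod (Cminus (Ep r s) (Ep r t0))) t0 L).
  + apply cpt_Ep_dist.
  + have -> : Cminus (Ep r t0) (Ep r t0) = RtoC 0 by unfold Cminus; ring. apply Cmod_0.
  + intros s. eapply Rle_trans. apply Cmod_sub_snd. apply H.
Qed.

Lemma ContC_scal r c f : ContC r f -> ContC r (fun z => Cmult c (f z)).
Proof. intros H. apply (ContF_mult (ContF_const c) H). Qed.
Lemma ContC_plus r f g : ContC r f -> ContC r g -> ContC r (fun z => Cplus (f z) (g z)).
Proof. intros H1 H2. apply (ContF_plus H1 H2). Qed.
Lemma Cminus_m1 (a b : C) : Cminus a b = Cplus a (Cmult (RtoC (-1)) b).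
Proof. destruct a, b. unfold Cminus, Cplus, Cmult, Copp, RtoC; cbn [fst snd]. f_equal; ring. Qed.

Lemma ContC_minus r f g : ContC r f -> ContC r g -> ContC r (fun z => Cminus (f z) (g z)).
Proof.
intros H1 H2.
have -> : (fun z => Cminus (f z) (g z)) = (fun z => Cplus (f z) (Cmult (RtoC (-1)) (g z))).
{ apply functional_extensionality => z. by rewrite Cminus_m1. }
apply ContC_plus => //. apply ContC_scal => //.
Qed.

Lemma ci_minus r f g : ContC r f -> ContC r g ->
  circle_int r (fun z => Cminus (f z) (g z)) = Cminus (circle_int r f) (circle_int r g).
Proof.
intros H1 H2.
have -> : (fun z => Cminus (f z) (g z)) = (fun z => Cplus (f z) (Cmult (RtoC (-1)) (g z))).
{ apply functional_extensionality => z. by rewrite Cminus_m1. }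
rewrite ci_plus //. 2: apply ContC_scal => //.
rewrite ci_scal //. by rewrite Cminus_m1.
Qed.

Lemma Dom_upd N r xi v z : Dom N r xi -> Cmod z = r -> Dom N r (upd xi v z).
Proof. move=> H Hz j hj. rewrite /upd. case: eqP => _; auto. Qed.
Arguments Dom_upd {N r xi} v {z}.

Lemma Good_ContC N r G xi v : 0 <= r -> Good N r G -> Dom N r xi -> ContC r (fun z => G (upd xi v z)).
Proof.
move=> hr [B [L [HL H]]] Hxi. apply (@Lip_ContC r _ L) => s t.
have Ds := Dom_upd v Hxi (Cmod_Ep r s hr).
have Dt := Dom_upd v Hxi (Cmod_Ep r t hr).
eapply Rle_trans. apply (proj2 (H _ _ Ds Dt)).
apply Rmult_le_compat_l => //. apply dist_upd_var.
Qed.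

Lemma Good_ci N r G v : 0 <= r -> Good N r G -> Good N r (fun xi => circle_int r (fun z => G (upd xi v z))).
Proof.
move=> hr HG. have HG' := HG. case: HG' => [B [L [HL H]]].
exists (2 * r * B), (2 * r * L). split; first nra.
move=> xi xi' Hxi Hxi'.
have C1 := @Good_ContC N r G xi v hr HG Hxi. have C2 := @Good_ContC N r G xi' v hr HG Hxi'. split.
- apply ci_bound => //.
  move=> z Hz. apply (proj1 (H _ _ (Dom_upd v Hxi Hz) (Dom_upd v Hxi Hz))).
- rewrite -ci_minus //.
  have -> : 2 * r * L * dist N xi xi' = 2 * r * (L * dist N xi xi') by ring.
  apply ci_bound => //. by apply ContC_minus.
  move=> z Hz. eapply Rle_trans. apply (proj2 (H _ _ (Dom_upd v Hxi Hz) (Dom_upd v Hxi' Hz))).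
  apply Rmult_le_compat_l => //. apply dist_upd_same.
Qed.

Lemma Good_circ_iter N r G vs : 0 <= r -> Good N r G -> Good N r (circ_iter r vs G).
Proof.
move=> hr HG. elim: vs => [|v vs IH] //=. by apply Good_ci.
Qed.

Lemma circ_iter_cons r v vs G xi : circ_iter r (v :: vs) G xi = circle_int r (fun z => circ_iter r vs G (upd xi v z)).
Proof. reflexivity. Qed.

Lemma circ_iter_lin N r G1 G2 vs xi : 0 <= r -> Good N r G1 -> Good N r G2 -> Dom N r xi ->
  circ_iter r vs (fun xi => Cplus (G1 xi) (G2 xi)) xi = Cplus (circ_iter r vs G1 xi) (circ_iter r vs G2 xi).
Proof.
move=> hr H1 H2. elim: vs xi => [|v vs IH] xi Hxi //=.
rewrite (@ci_ext r _ (fun z => Cplus (circ_iter r vs G1 (upd xi v z)) (circ_iter r vs G2 (upd xi v z)))) //.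
- apply ci_plus; apply (@Good_ContC N) => //; by apply Good_circ_iter.
- move=> z Hz. apply IH. by apply Dom_upd.
Qed.

Definition IndepL (A : (nat -> C) -> C) (vs : seq nat) := forall xi j z, j \in vs -> A (upd xi j z) = A xi.

Lemma circ_iter_scal N r A G vs xi : 0 <= r -> Good N r G -> IndepL A vs -> Dom N r xi ->
  circ_iter r vs (fun xi => Cmult (A xi) (G xi)) xi = Cmult (A xi) (circ_iter r vs G xi).
Proof.
move=> hr HG. elim: vs xi => [|v vs IH] xi HA Hxi //=.
rewrite (@ci_ext r _ (fun z => Cmult (A xi) (circ_iter r vs G (upd xi v z)))) //.
- apply ci_scal. apply (@Good_ContC N) => //. by apply Good_circ_iter.
- move=> z Hz. rewrite IH.
  + rewrite HA //. by rewrite inE eqxx.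
  + move=> xi' j w Hj. apply HA. by rewrite inE Hj orbT.
  + by apply Dom_upd.
Qed.

Lemma circ_iter_zero N r G vs xi : 0 <= r -> (forall xi, Dom N r xi -> G xi = RtoC 0) -> Dom N r xi ->
  circ_iter r vs G xi = RtoC 0.
Proof.
move=> hr HG. elim: vs xi => [|v vs IH] xi Hxi /=. by apply HG.
apply ci_zero_on => // z Hz. apply IH. by apply Dom_upd.
Qed.

Lemma circ_iter_cat r vs1 vs2 G xi : circ_iter r (vs1 ++ vs2) G xi = circ_iter r vs1 (circ_iter r vs2 G) xi.
Proof.
elim: vs1 xi => [|v vs IH] xi //=. f_equal. apply functional_extensionality => z. apply IH.
Qed.

Lemma circ_iter_agree r vs G xi xi' : (forall j, j \notin vs -> xi j = xi' j) ->
  circ_iter r vs G xi = circ_iter r vs G xi'.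
Proof.
elim: vs G xi xi' => [|v vs IH] G xi xi' H /=.
- f_equal. apply functional_extensionality => j. apply H. by [].
- f_equal. apply functional_extensionality => z. apply IH => j Hj.
  rewrite /upd. case: eqP => // E. apply H. rewrite inE negb_or Hj andbT. by apply/eqP.
Qed.

Lemma circ_iter_indep r vs G j z xi : (forall xi z, G (upd xi j z) = G xi) ->
  circ_iter r vs G (upd xi j z) = circ_iter r vs G xi.
Proof.
move=> HG. elim: vs xi => [|v vs IH] xi /=. apply HG.
f_equal. apply functional_extensionality => w.
case: (eqVneq j v) => [E|E].
- subst v. f_equal. apply functional_extensionality => k. rewrite /upd. by case: eqP.
- have -> : upd (upd xi j z) v w = upd (upd xi v w) j z.
  { apply functional_extensionality => k. rewrite /upd. case: eqP => [->|//]. case: eqP => // E2.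
    subst j. by rewrite eqxx in E. }
  apply IH.
Qed.

Lemma Good_ext N r G G' : Good N r G -> (forall xi, Dom N r xi -> G xi = G' xi) -> Good N r G'.
Proof.
move=> [B [L [HL H]]] E. exists B, L. split => // xi xi' D D'.
rewrite -(E xi D) -(E xi' D'). by apply H.
Qed.

Lemma Good_const N r c : Good N r (fun _ => c).
Proof.
exists (Cmod c), 0. split; first lra. move=> xi xi' _ _. split; first lra.
have -> : Cminus c c = RtoC 0 by unfold Cminus; ring. rewrite Cmod_0. lra.
Qed.

Lemma Good_coord N r j : (j < N)%N -> Good N r (fun xi => xi j).
Proof.
move=> Hj. exists r, 1. split; first lra. move=> xi xi' D D'. split.
- rewrite D //. lra.
- rewrite Rmult_1_l. by apply dist_coord.
Qed.

Lemma Good_plus N r G1 G2 : Good N r G1 -> Good N r G2 -> Good N r (fun xi => Cplus (G1 xi) (G2 xi)).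
Proof.
move=> [B1 [L1 [HL1 H1]]] [B2 [L2 [HL2 H2]]].
exists (B1 + B2), (L1 + L2). split; first lra. move=> xi xi' D D'.
case: (H1 _ _ D D') => H1a H1b. case: (H2 _ _ D D') => H2a H2b. split.
- eapply Rle_trans. apply Cmod_triangle. lra.
- have -> : Cminus (Cplus (G1 xi) (G2 xi)) (Cplus (G1 xi') (G2 xi')) =
    Cplus (Cminus (G1 xi) (G1 xi')) (Cminus (G2 xi) (G2 xi')) by unfold Cminus; ring.
  eapply Rle_trans. apply Cmod_triangle. lra.
Qed.

Lemma Good_mult N r G1 G2 : Good N r G1 -> Good N r G2 -> Good N r (fun xi => Cmult (G1 xi) (G2 xi)).
Proof.
move=> [B1 [L1 [HL1 H1]]] [B2 [L2 [HL2 H2]]].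
exists (B1 * B2), (Rabs B1 * L2 + Rabs B2 * L1). split.
{ have := Rabs_pos B1. have := Rabs_pos B2. nra. }
move=> xi xi' D D'.
case: (H1 _ _ D D') => H1a H1b. case: (H2 _ _ D D') => H2a H2b.
case: (H1 _ _ D' D') => H1a' _. case: (H2 _ _ D' D') => H2a' _.
have := Cmod_ge_0 (G1 xi). have := Cmod_ge_0 (G2 xi'). have := Rle_abs B1. have := Rle_abs B2.
have := dist_ge0 N xi xi'. move=> Hd HB2 HB1 HG2 HG1.
split.
- rewrite Cmod_mult. apply Rmult_le_compat => //. apply Cmod_ge_0.
- have -> : Cminus (Cmult (G1 xi) (G2 xi)) (Cmult (G1 xi') (G2 xi')) =
    Cplus (Cmult (G1 xi) (Cminus (G2 xi) (G2 xi'))) (Cmult (G2 xi') (Cminus (G1 xi) (G1 xi'))) by unfold Cminus; ring.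
  eapply Rle_trans. apply Cmod_triangle. rewrite !Cmod_mult.
  have E1 : Cmod (G1 xi) * Cmod (Cminus (G2 xi) (G2 xi')) <= Rabs B1 * (L2 * dist N xi xi').
  { apply Rmult_le_compat => //; try apply Cmod_ge_0. lra. }
  have E2 : Cmod (G2 xi') * Cmod (Cminus (G1 xi) (G1 xi')) <= Rabs B2 * (L1 * dist N xi xi').
  { apply Rmult_le_compat => //; try apply Cmod_ge_0. lra. }
  nra.
Qed.

Lemma Good_inv N r G d : 0 < d -> Good N r G -> (forall xi, Dom N r xi -> d <= Cmod (G xi)) ->
  Good N r (fun xi => Cinv (G xi)).
Proof.
move=> hd [B [L [HL H]]] Hlow.
exists (/ d), (L / (d * d)). split.
{ apply Rmult_le_pos => //. apply Rlt_le, Rinv_0_lt_compat. nra. }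
move=> xi xi' D D'.
have h1 := Hlow _ D. have h2 := Hlow _ D'.
have n1 : G xi <> RtoC 0 by move=> E; rewrite E Cmod_0 in h1; lra.
have n2 : G xi' <> RtoC 0 by move=> E; rewrite E Cmod_0 in h2; lra.
split.
- rewrite Cmod_inv //. apply Rinv_le_contravar => //.
- have -> : Cminus (Cinv (G xi)) (Cinv (G xi')) = Cdiv (Cminus (G xi') (G xi)) (Cmult (G xi) (G xi')).
  { field. split => //. }
  rewrite Cmod_div. 2:{ apply Cmult_neq_0 => //. }
  rewrite Cmod_mult.
  case: (H _ _ D' D) => _ HL2.
  have Hdd : d * d <= Cmod (G xi) * Cmod (G xi') by apply Rmult_le_compat; lra.
  have Hsym : dist N xi' xi = dist N xi xi'.
  { clear. elim: N => [|n IH] //=. rewrite IH. f_equal.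
    rewrite -Cmod_opp. f_equal. unfold Cminus. ring. }
  rewrite Hsym in HL2.
  apply Rle_trans with (L * dist N xi xi' / (Cmod (G xi) * Cmod (G xi'))).
  + apply Rmult_le_compat_r => //. apply Rlt_le, Rinv_0_lt_compat. nra.
  + have := dist_ge0 N xi xi'. move=> Hd.
    apply Rle_trans with (L * dist N xi xi' / (d * d)).
    * apply Rmult_le_compat_l. nra. apply Rinv_le_contravar => //. nra.
    * right. field. lra.
Qed.

Lemma Cmod_Cpow z n : Cmod (Cpow z n) = Cmod z ^ n.
Proof. elim: n => [|n IH] /=. by rewrite Cmod_1. by rewrite Cmod_mult IH. Qed.

Lemma Cpow_add z a b : Cpow z (a + b) = Cmult (Cpow z a) (Cpow z b).
Proof. elim: a => [|a IH]. rewrite add0n. cbn [Cpow]. ring. rewrite addSn. cbn [Cpow]. rewrite IH. ring. Qed.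

Lemma Cpow_nz z n : z <> RtoC 0 -> Cpow z n <> RtoC 0.
Proof.
move=> Hz. elim: n => [|n IH] /=.
- move=> E. injection E. lra.
- by apply Cmult_neq_0.
Qed.

Lemma Good_Cpow N r G n : Good N r G -> Good N r (fun xi => Cpow (G xi) n).
Proof.
move=> HG. elim: n => [|n IH] /=. apply Good_const. by apply Good_mult.
Qed.

Lemma Good_Cpowz N r G e d : 0 < d -> Good N r G -> (forall xi, Dom N r xi -> d <= Cmod (G xi)) ->
  Good N r (fun xi => Cpowz (G xi) e).
Proof.
move=> hd HG Hlow. case: e => [|p|p] /=.
- apply Good_const.
- by apply Good_Cpow.
- apply (@Good_inv N r _ (d ^ (Pos.to_nat p))). by apply pow_lt.
  by apply Good_Cpow.
  move=> xi D. rewrite Cmod_Cpow. apply pow_incr. split; first lra. by apply Hlow.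
Qed.

Lemma Good_Cprod N r (T : Type) (l : seq T) (g : T -> (nat -> C) -> C) :
  (forall x, List.In x l -> Good N r (g x)) -> Good N r (fun xi => Cprod [seq g x xi | x <- l]).
Proof.
elim: l => [|x l IH] H /=. apply Good_const.
apply Good_mult. apply H; by left. apply IH => y Hy. apply H; by right.
Qed.

Definition peval (P : seq (C * nat)) (z : C) : C :=
  foldr (fun cn acc => Cplus (Cmult cn.1 (Cpow z cn.2)) acc) (RtoC 0) P.

Lemma peval_nil z : peval [::] z = RtoC 0.
Proof. reflexivity. Qed.
Lemma peval_cons a P z : peval (a :: P) z = Cplus (Cmult a.1 (Cpow z a.2)) (peval P z).
Proof. reflexivity. Qed.

Lemma peval_cat P1 P2 z : peval (P1 ++ P2) z = Cplus (peval P1 z) (peval P2 z).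
Proof. elim: P1 => [|a P1 IH]. rewrite cat0s peval_nil. ring. rewrite cat_cons !peval_cons IH. ring. Qed.

Fixpoint pmul (P1 P2 : seq (C * nat)) : seq (C * nat) :=
  match P1 with
  | [::] => [::]
  | a :: P1' => [seq (Cmult a.1 b.1, (a.2 + b.2)%N) | b <- P2] ++ pmul P1' P2
  end.

Lemma peval_map a P2 z : peval [seq (Cmult a.1 b.1, (a.2 + b.2)%N) | b <- P2] z
  = Cmult (Cmult a.1 (Cpow z a.2)) (peval P2 z).
Proof.
elim: P2 => [|b P2 IH]. cbn [map]. rewrite !peval_nil. ring.
rewrite map_cons !peval_cons IH Cpow_add. cbn [fst snd]. ring.
Qed.

Lemma peval_pmul P1 P2 z : peval (pmul P1 P2) z = Cmult (peval P1 z) (peval P2 z).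
Proof.
elim: P1 => [|a P1 IH]. cbn [pmul]. rewrite !peval_nil. ring.
cbn [pmul]. rewrite peval_cat peval_map IH peval_cons. ring.
Qed.

Lemma Cpowz_nat z n : Cpowz z (Z.of_nat n) = Cpow z n.
Proof. case: n => [|n] //=. by rewrite SuccNat2Pos.id_succ. Qed.

Lemma ContC_Cpow r n : 0 < r -> ContC r (fun z => Cpow z n).
Proof.
move=> hr. have -> : (fun z => Cpow z n) = (fun z => Cpowz z (Z.of_nat n)).
{ apply functional_extensionality => z. by rewrite Cpowz_nat. }
by apply ContC_Cpowz.
Qed.

Lemma ContC_const r c : ContC r (fun _ => c).
Proof. intros t; apply ContF_const. Qed.

Lemma ContC_peval r P : 0 < r -> ContC r (peval P).
Proof.
move=> hr. elim: P => [|a P IH].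
- rewrite /peval /=. apply ContC_const.
- have -> : peval (a :: P) = (fun z => Cplus (Cmult a.1 (Cpow z a.2)) (peval P z)) by reflexivity.
  apply ContC_plus => //. apply ContC_scal. by apply ContC_Cpow.
Qed.

Lemma ci_peval r P : 0 < r -> circle_int r (peval P) = RtoC 0.
Proof.
move=> hr. elim: P => [|a P IH].
- rewrite /peval /=. apply ci_zero.
- have -> : peval (a :: P) = (fun z => Cplus (Cmult a.1 (Cpow z a.2)) (peval P z)) by reflexivity.
  rewrite ci_plus //. 2: apply ContC_scal; by apply ContC_Cpow. 2: by apply ContC_peval.
  rewrite IH ci_scal. 2: by apply ContC_Cpow.
  have -> : (fun z => Cpow z a.2) = (fun z => Cpowz z (Z.of_nat a.2)).
  { apply functional_extensionality => z. by rewrite Cpowz_nat. }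
  rewrite ci_Cpowz //. ring. lia.
Qed.

Lemma geom_zero x K : 0 <= x -> (forall M : nat, x <= K * (/2) ^ M) -> x = 0.
Proof.
move=> hx H. case: (Rle_lt_or_eq_dec 0 x hx) => // Hpos. exfalso.
have Hh : Rabs (/2) < 1 by rewrite Rabs_right; lra.
case: (pow_lt_1_zero (/2) Hh (x / (Rabs K + 1))) => [|M HM].
{ apply Rdiv_lt_0_compat => //. have := Rabs_pos K. lra. }
have H1 := HM M (le_n M). have H2 := H M.
have hp : 0 < (/2) ^ M by apply pow_lt; lra.
rewrite Rabs_right in H1; last lra.
have : K * (/2)^M <= Rabs K * (/2)^M by apply Rmult_le_compat_r; [lra | apply Rle_abs].
have : Rabs K * (/2)^M < Rabs K * (x / (Rabs K + 1)) + (x / (Rabs K + 1)) * 1.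
{ have := Rabs_pos K. nra. }
have : Rabs K * (x / (Rabs K + 1)) + (x / (Rabs K + 1)) * 1 = x.
{ field. have := Rabs_pos K. lra. }
lra.
Qed.

Definition HolIn N r j (G : (nat -> C) -> C) := forall xi, Dom N r xi -> exists K, 0 <= K /\
  forall M : nat, exists P, forall z, Cmod z = r -> Cmod (Cminus (G (upd xi j z)) (peval P z)) <= K * (/2) ^ M.

Lemma cauchy N r j G xi : 0 < r -> Good N r G -> HolIn N r j G -> Dom N r xi ->
  circle_int r (fun z => G (upd xi j z)) = RtoC 0.
Proof.
move=> hr HG HH D.
have hr' : 0 <= r by lra.
case: (HH xi D) => K [HK HM].
have HC := @Good_ContC N r G xi j hr' HG D.
apply Cmod_eq_0. apply (@geom_zero _ (2 * r * K)). apply Cmod_ge_0.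
move=> M. case: (HM M) => P HP.
have -> : circle_int r (fun z => G (upd xi j z)) = circle_int r (fun z => Cminus (G (upd xi j z)) (peval P z)).
{ rewrite ci_minus //. 2: by apply ContC_peval. rewrite ci_peval //. unfold Cminus. ring. }
rewrite Rmult_assoc. apply ci_bound => //. apply ContC_minus => //. by apply ContC_peval.
Qed.

Lemma HolIn_indep N r j G : (forall xi z, G (upd xi j z) = G xi) -> HolIn N r j G.
Proof.
move=> HI xi D. exists 0. split; first lra. move=> M. exists [:: (G xi, 0%N)] => z _.
rewrite HI peval_cons peval_nil. cbn [fst snd Cpow]. have -> : Cminus (G xi) (Cplus (Cmult (G xi) (RtoC 1)) (RtoC 0)) = RtoC 0 by unfold Cminus; ring.
rewrite Cmod_0. lra.
Qed.

Lemma HolIn_coord N r j : HolIn N r j (fun xi => xi j).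
Proof.
move=> xi D. exists 0. split; first lra. move=> M. exists [:: (RtoC 1, 1%N)] => z _.
rewrite upd_same peval_cons peval_nil. cbn [fst snd Cpow]. have -> : Cminus z (Cplus (Cmult (RtoC 1) (Cmult z (RtoC 1))) (RtoC 0)) = RtoC 0 by unfold Cminus; ring.
rewrite Cmod_0. lra.
Qed.

Lemma HolIn_ext N r j G G' : HolIn N r j G -> (forall xi, Dom N r xi -> G xi = G' xi) -> HolIn N r j G'.
Proof.
move=> H E xi D. case: (H xi D) => K [HK HM]. exists K. split => // M.
case: (HM M) => P HP. exists P => z Hz. rewrite -E. by apply HP. by apply Dom_upd.
Qed.

Lemma HolIn_plus N r j G1 G2 : HolIn N r j G1 -> HolIn N r j G2 -> HolIn N r j (fun xi => Cplus (G1 xi) (G2 xi)).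
Proof.
move=> H1 H2 xi D. case: (H1 xi D) => K1 [HK1 HM1]. case: (H2 xi D) => K2 [HK2 HM2].
exists (K1 + K2). split; first lra. move=> M.
case: (HM1 M) => P1 HP1. case: (HM2 M) => P2 HP2. exists (P1 ++ P2) => z Hz.
rewrite peval_cat.
have -> : Cminus (Cplus (G1 (upd xi j z)) (G2 (upd xi j z))) (Cplus (peval P1 z) (peval P2 z)) =
  Cplus (Cminus (G1 (upd xi j z)) (peval P1 z)) (Cminus (G2 (upd xi j z)) (peval P2 z)) by unfold Cminus; ring.
eapply Rle_trans. apply Cmod_triangle. have := HP1 z Hz. have := HP2 z Hz. lra.
Qed.

Lemma HolIn_mult N r j G1 G2 : Good N r G1 -> Good N r G2 -> HolIn N r j G1 -> HolIn N r j G2 ->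
  HolIn N r j (fun xi => Cmult (G1 xi) (G2 xi)).
Proof.
move=> [B1 [L1 [_ HB1]]] [B2 [L2 [_ HB2]]] H1 H2 xi D.
case: (H1 xi D) => K1 [HK1 HM1]. case: (H2 xi D) => K2 [HK2 HM2].
exists (Rabs B1 * K2 + (Rabs B2 + K2) * K1). split.
{ have := Rabs_pos B1. have := Rabs_pos B2. nra. }
move=> M.
case: (HM1 M) => P1 HP1. case: (HM2 M) => P2 HP2. exists (pmul P1 P2) => z Hz.
have Dz := Dom_upd j D Hz.
have Hb1 : Cmod (G1 (upd xi j z)) <= Rabs B1.
{ eapply Rle_trans. apply (proj1 (HB1 _ _ Dz Dz)). apply Rle_abs. }
have Hb2 : Cmod (G2 (upd xi j z)) <= Rabs B2.
{ eapply Rle_trans. apply (proj1 (HB2 _ _ Dz Dz)). apply Rle_abs. }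
have Hh : (/2) ^ M <= 1. { rewrite -(pow1 M). apply pow_incr. lra. }
have Hh0 : 0 <= (/2) ^ M. { apply pow_le. lra. }
have E1 := HP1 z Hz. have E2 := HP2 z Hz.
have Hp2 : Cmod (peval P2 z) <= Rabs B2 + K2.
{ have -> : peval P2 z = Cminus (G2 (upd xi j z)) (Cminus (G2 (upd xi j z)) (peval P2 z)) by unfold Cminus; ring.
  eapply Rle_trans. unfold Cminus at 1. eapply Rle_trans. apply Cmod_triangle. rewrite Cmod_opp. apply Rle_refl.
  nra. }
rewrite peval_pmul.
have -> : Cminus (Cmult (G1 (upd xi j z)) (G2 (upd xi j z))) (Cmult (peval P1 z) (peval P2 z)) =
  Cplus (Cmult (G1 (upd xi j z)) (Cminus (G2 (upd xi j z)) (peval P2 z)))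
        (Cmult (peval P2 z) (Cminus (G1 (upd xi j z)) (peval P1 z))) by unfold Cminus; ring.
eapply Rle_trans. apply Cmod_triangle. rewrite !Cmod_mult.
have F1 : Cmod (G1 (upd xi j z)) * Cmod (Cminus (G2 (upd xi j z)) (peval P2 z)) <= Rabs B1 * (K2 * (/2)^M).
{ apply Rmult_le_compat => //; apply Cmod_ge_0. }
have F2 : Cmod (peval P2 z) * Cmod (Cminus (G1 (upd xi j z)) (peval P1 z)) <= (Rabs B2 + K2) * (K1 * (/2)^M).
{ apply Rmult_le_compat => //; apply Cmod_ge_0. }
nra.
Qed.

Lemma Cpow_mult a b n : Cpow (Cmult a b) n = Cmult (Cpow a n) (Cpow b n).
Proof. elim: n => [|n IH]; cbn [Cpow]. ring. rewrite IH. ring. Qed.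

Definition geomP (a b : C) (M : nat) : seq (C * nat) :=
  [seq (Cdiv (Cpow (Copp b) n) (Cpow a n.+1), n) | n <- iota 0 M].

Lemma geom_id a b z M : a <> RtoC 0 -> Cplus a (Cmult b z) <> RtoC 0 ->
  Cminus (Cinv (Cplus a (Cmult b z))) (peval (geomP a b M) z) =
  Cdiv (Cpow (Copp (Cmult b z)) M) (Cmult (Cpow a M) (Cplus a (Cmult b z))).
Proof.
move=> Ha HD. elim: M => [|M IH].
- rewrite /geomP. cbn [iota map]. rewrite peval_nil. cbn [Cpow]. field; repeat split; try assumption; try (move=> E; injection E; lra).
- rewrite /geomP -addn1 iotaD map_cat peval_cat add0n -/(geomP a b M).
  have -> : peval [seq (Cdiv (Cpow (Copp b) n) (Cpow a n.+1), n) | n <- iota M 1] z =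
    Cmult (Cdiv (Cpow (Copp b) M) (Cpow a M.+1)) (Cpow z M).
  { cbn [iota map]. rewrite peval_cons peval_nil. cbn [fst snd]. ring. }
  have -> : Cminus (Cinv (Cplus a (Cmult b z))) (Cplus (peval (geomP a b M) z) (Cmult (Cdiv (Cpow (Copp b) M) (Cpow a M.+1)) (Cpow z M)))
    = Cminus (Cminus (Cinv (Cplus a (Cmult b z))) (peval (geomP a b M) z)) (Cmult (Cdiv (Cpow (Copp b) M) (Cpow a M.+1)) (Cpow z M))
    by unfold Cminus; ring.
  rewrite IH addn1.
  have HaM := Cpow_nz a M Ha.
  have -> : Copp (Cmult b z) = Cmult (Copp b) z by ring.
  rewrite !Cpow_mult. cbn [Cpow].
  field; repeat split; try assumption; try (move=> E; injection E; lra).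
Qed.

Lemma HolIn_inv_affine N r j G : 0 < r ->
  (forall xi, Dom N r xi -> exists a b, a <> RtoC 0 /\ Cmod b * r <= Cmod a / 2 /\
     forall z, Cmod z = r -> G (upd xi j z) = Cplus a (Cmult b z)) ->
  HolIn N r j (fun xi => Cinv (G xi)).
Proof.
move=> hr H xi D. case: (H xi D) => a [b [Ha [Hab Hz]]].
have Hpa : 0 < Cmod a by apply Cmod_gt_0.
exists (2 / Cmod a). split. { apply Rlt_le, Rdiv_lt_0_compat; lra. }
move=> M. exists (geomP a b M) => z Hzr.
have HDl : Cmod a / 2 <= Cmod (Cplus a (Cmult b z)).
{ have : Cmod a <= Cmod (Cplus a (Cmult b z)) + Cmod (Cmult b z).
  { have -> : a = Cplus (Cplus a (Cmult b z)) (Copp (Cmult b z)) by ring.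
    eapply Rle_trans. apply Cmod_triangle. rewrite Cmod_opp.
    have -> : Cplus (Cplus (Cplus a (Cmult b z)) (Copp (Cmult b z))) (Cmult b z) = Cplus a (Cmult b z) by ring.
    lra. }
  rewrite Cmod_mult Hzr. lra. }
have HD : Cplus a (Cmult b z) <> RtoC 0.
{ move=> E. rewrite E Cmod_0 in HDl. lra. }
rewrite Hz // geom_id //.
rewrite Cmod_div. 2: apply Cmult_neq_0 => //; by apply Cpow_nz.
rewrite Cmod_mult !Cmod_Cpow Cmod_opp Cmod_mult Hzr.
have HaM : 0 < Cmod a ^ M by apply pow_lt.
have E1 : (Cmod b * r) ^ M <= Cmod a ^ M * (/2) ^ M.
{ rewrite -Rpow_mult_distr. apply pow_incr. split. have := Cmod_ge_0 b. nra. lra. }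
apply Rle_trans with ((Cmod a ^ M * (/ 2) ^ M) / (Cmod a ^ M * (Cmod a / 2))).
- apply Rmult_le_compat => //. have := Cmod_ge_0 b. have := pow_le (Cmod b * r) M. nra.
  apply Rlt_le, Rinv_0_lt_compat. nra.
  apply Rinv_le_contravar. nra. apply Rmult_le_compat_l; lra.
- right. field. lra.
Qed.

Lemma Cpowz_alt z e : Cpowz z e = if (0 <=? e)%Z then Cpow z (Z.to_nat e) else Cinv (Cpow z (Z.to_nat (- e))).
Proof. case: e => [|p|p] //=. Qed.

Lemma Cpowz_succ z e : z <> RtoC 0 -> Cpowz z (e + 1) = Cmult z (Cpowz z e).
Proof.
move=> Hz. rewrite !Cpowz_alt.
case: (Z.leb_spec 0 e) => He.
- have -> : (0 <=? e + 1)%Z = true by apply Z.leb_le; lia.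
  have -> : Z.to_nat (e + 1) = S (Z.to_nat e) by lia. reflexivity.
- case: (Z.eq_dec e (-1)) => Hm.
  + subst e. have -> : (0 <=? -1 + 1)%Z = true by reflexivity.
    have -> : Z.to_nat (-1+1) = 0%N by reflexivity. have -> : Z.to_nat (- -1) = 1%N by reflexivity.
    cbn [Cpow]. field. exact Hz.
  + have -> : (0 <=? e + 1)%Z = false by apply Z.leb_gt; lia.
    have -> : Z.to_nat (- e) = S (Z.to_nat (- (e + 1))) by lia.
    cbn [Cpow]. field. split => //. by apply Cpow_nz.
Qed.

Lemma Cpowz_add_nat z e n : z <> RtoC 0 -> Cpowz z (e + Z.of_nat n) = Cmult (Cpowz z e) (Cpow z n).
Proof.
move=> Hz. elim: n => [|n IH].
- rewrite Z.add_0_r. cbn [Cpow]. ring.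
- rewrite Nat2Z.inj_succ Z.add_succ_r -Z.add_1_r Cpowz_succ // IH. cbn [Cpow]. ring.
Qed.

Lemma Cpowz_nonneg z e : (0 <= e)%Z -> Cpowz z e = Cpow z (Z.to_nat e).
Proof. move=> He. rewrite Cpowz_alt. by have -> : (0 <=? e)%Z = true by apply Z.leb_le. Qed.

Definition GH N r j X := Good N r X /\ HolIn N r j X.

Lemma GH_plus N r j X1 X2 : GH N r j X1 -> GH N r j X2 -> GH N r j (fun xi => Cplus (X1 xi) (X2 xi)).
Proof. move=> [G1 H1] [G2 H2]. split. by apply Good_plus. by apply HolIn_plus. Qed.

Lemma GH_mult N r j X1 X2 : GH N r j X1 -> GH N r j X2 -> GH N r j (fun xi => Cmult (X1 xi) (X2 xi)).
Proof. move=> [G1 H1] [G2 H2]. split. by apply Good_mult. by apply HolIn_mult. Qed.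

Lemma GH_ext N r j X X' : GH N r j X -> (forall xi, Dom N r xi -> X xi = X' xi) -> GH N r j X'.
Proof. move=> [G1 H1] E. split. exact (@Good_ext N r X X' G1 E). exact (@HolIn_ext N r j X X' H1 E). Qed.

Lemma GH_indep N r j X : Good N r X -> (forall xi z, X (upd xi j z) = X xi) -> GH N r j X.
Proof. move=> G1 HI. split => //. by apply HolIn_indep. Qed.

Lemma GH_const N r j c : GH N r j (fun _ => c).
Proof. apply GH_indep. apply Good_const. by []. Qed.

Lemma GH_coord N r j : (j < N)%N -> GH N r j (fun xi => xi j).
Proof. move=> Hj. split. by apply Good_coord. apply HolIn_coord. Qed.

Lemma GH_Cpow N r j X n : GH N r j X -> GH N r j (fun xi => Cpow (X xi) n).
Proof. move=> HX. elim: n => [|n IH]; cbn [Cpow]. apply GH_const. by apply GH_mult. Qed.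

Lemma GH_Cprod N r j (T : Type) (l : seq T) (g : T -> (nat -> C) -> C) :
  (forall x, List.In x l -> GH N r j (g x)) -> GH N r j (fun xi => Cprod [seq g x xi | x <- l]).
Proof.
elim: l => [|x l IH] H /=. apply GH_const.
apply GH_mult. apply H; by left. apply IH => y Hy. apply H; by right.
Qed.

Lemma GH_inv_affine N r j G d : 0 < r -> 0 < d -> Good N r G -> (forall xi, Dom N r xi -> d <= Cmod (G xi)) ->
  (forall xi, Dom N r xi -> exists a b, a <> RtoC 0 /\ Cmod b * r <= Cmod a / 2 /\
     forall z, Cmod z = r -> G (upd xi j z) = Cplus a (Cmult b z)) ->
  GH N r j (fun xi => Cinv (G xi)).
Proof.
move=> hr hd HG Hl Ha. split. exact (@Good_inv N r G d hd HG Hl). by apply HolIn_inv_affine.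
Qed.

Lemma circ_iter_ext_dom N r vs G G' xi : 0 <= r -> (forall xi, Dom N r xi -> G xi = G' xi) -> Dom N r xi ->
  circ_iter r vs G xi = circ_iter r vs G' xi.
Proof.
move=> hr HG. elim: vs xi => [|v vs IH] xi Hxi /=. by apply HG.
apply ci_ext => // z Hz. apply IH. by apply Dom_upd.
Qed.

Definition Zp N r b m L2 L3 H (X : (nat -> C) -> C) :=
  forall xi, Dom N r xi -> circ_iter r (b :: L2 ++ m :: L3) (fun xi => Cmult (X xi) (H xi)) xi = RtoC 0.

Lemma Z_plus N r b m L2 L3 H X1 X2 : 0 <= r -> Good N r H -> Good N r X1 -> Good N r X2 ->
  Zp N r b m L2 L3 H X1 -> Zp N r b m L2 L3 H X2 -> Zp N r b m L2 L3 H (fun xi => Cplus (X1 xi) (X2 xi)).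
Proof.
move=> hr HH G1 G2 Z1 Z2 xi D.
have -> : (fun xi => Cmult (Cplus (X1 xi) (X2 xi)) (H xi)) = (fun xi => Cplus (Cmult (X1 xi) (H xi)) (Cmult (X2 xi) (H xi))).
{ apply functional_extensionality => xi'. ring. }
rewrite (@circ_iter_lin N) //; try by apply Good_mult.
rewrite Z1 // Z2 //. ring.
Qed.

Lemma Z_ext N r b m L2 L3 H X X' : 0 <= r -> Zp N r b m L2 L3 H X -> (forall xi, Dom N r xi -> X xi = X' xi) ->
  Zp N r b m L2 L3 H X'.
Proof.
move=> hr Z E xi D. rewrite -(Z xi D). apply (@circ_iter_ext_dom N) => // xi' D'. by rewrite E.
Qed.

Lemma Z_ukill N r b m L2 L3 H phi e : 0 < r -> Good N r H -> Good N r phi ->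
  b \notin L2 ++ m :: L3 ->
  (forall xi z, H (upd xi b z) = H xi) -> (forall xi z, phi (upd xi b z) = phi xi) -> e <> (-1)%Z ->
  Zp N r b m L2 L3 H (fun xi => Cmult (Cpowz (xi b) e) (phi xi)).
Proof.
move=> hr HH Hphi Hb HHb Hphib He xi D.
have hr' : 0 <= r by lra.
rewrite circ_iter_cons.
set c := circ_iter r (L2 ++ m :: L3) (fun xi => Cmult (phi xi) (H xi)) xi.
rewrite (@ci_ext r _ (fun z => Cmult c (Cpowz z e))) //.
- rewrite ci_scal. rewrite ci_Cpowz //. ring. by apply ContC_Cpowz.
- move=> z Hz.
  have -> : (fun xi => Cmult (Cmult (Cpowz (xi b) e) (phi xi)) (H xi)) = (fun xi => Cmult (Cpowz (xi b) e) (Cmult (phi xi) (H xi))).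
  { apply functional_extensionality => xi'. ring. }
  rewrite (@circ_iter_scal N) //.
  + rewrite upd_same /c circ_iter_indep. apply Cmult_comm. move=> xi' w. by rewrite HHb Hphib.
  + by apply Good_mult.
  + move=> xi' j w Hj. rewrite upd_other //. move=> E. subst j. by rewrite Hj in Hb.
  + by apply Dom_upd.
Qed.

Lemma Z_vkill N r b m L2 L3 H X : 0 < r -> Good N r H -> GH N r m X ->
  m \notin L3 -> (forall xi z, H (upd xi m z) = H xi) -> IndepL X L3 ->
  Zp N r b m L2 L3 H X.
Proof.
move=> hr HH [GX HX] Hm HHm HI xi D.
have hr' : 0 <= r by lra.
have -> : b :: L2 ++ m :: L3 = (b :: L2) ++ (m :: L3) by reflexivity.
rewrite circ_iter_cat. apply (@circ_iter_zero N) => // xi' D'.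
rewrite circ_iter_cons.
set K := circ_iter r L3 H xi'.
rewrite (@ci_ext r _ (fun z => Cmult K (X (upd xi' m z)))) //.
- rewrite ci_scal. rewrite (@cauchy N) //. ring. by apply (@Good_ContC N).
- move=> z Hz. rewrite (@circ_iter_scal N) //.
  + rewrite /K circ_iter_indep //. ring.
  + by apply Dom_upd.
Qed.

Definition sumF (l : seq nat) (f : nat -> (nat -> C) -> C) (xi : nat -> C) : C :=
  foldr (fun n acc => Cplus (f n xi) acc) (RtoC 0) l.

Lemma Good_sumF N r l f : (forall n, n \in l -> Good N r (f n)) -> Good N r (sumF l f).
Proof.
elim: l => [|n l IH] H. apply Good_const.
have -> : sumF (n :: l) f = (fun xi => Cplus (f n xi) (sumF l f xi)) by reflexivity.
apply Good_plus. apply H; by rewrite inE eqxx. apply IH => k Hk. apply H; by rewrite inE Hk orbT.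
Qed.

Lemma Z_sumF N r b m L2 L3 H l f : 0 <= r -> Good N r H -> (forall n, n \in l -> Good N r (f n) /\ Zp N r b m L2 L3 H (f n)) ->
  Zp N r b m L2 L3 H (sumF l f).
Proof.
move=> hr HH. elim: l => [|n l IH] Hf.
- move=> xi D. have -> : (fun xi => Cmult (sumF [::] f xi) (H xi)) = (fun _ => RtoC 0).
  { apply functional_extensionality => xi'. rewrite /sumF /=. ring. }
  apply (@circ_iter_zero N) => //.
- have -> : sumF (n :: l) f = (fun xi => Cplus (f n xi) (sumF l f xi)) by reflexivity.
  have Hn := Hf n (mem_head n l).
  apply Z_plus => //. apply Hn. apply Good_sumF => k Hk. apply Hf. by rewrite inE Hk orbT.
  apply Hn. apply IH => k Hk. apply Hf. by rewrite inE Hk orbT.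
Qed.

Definition Hyp p q r := 0 < p /\ 0 < q /\ p + q = 1 /\ 0 < r /\ r <= p / 4 /\ r <= 1/2.

Lemma Cmod_rev (a b : C) : Cmod a - Cmod b <= Cmod (Cplus a b).
Proof.
have E : a = Cplus (Cplus a b) (Copp b) by ring.
have := Cmod_triangle (Cplus a b) (Copp b). rewrite Cmod_opp -E. lra.
Qed.

Lemma Cmod_RtoC_pos (a : R) : 0 <= a -> Cmod (RtoC a) = a.
Proof. move=> h. rewrite Cmod_R. by apply Rabs_right; lra. Qed.

Lemma den_bound p q r w1 w2 w3 : Hyp p q r -> Cmod w1 = r -> Cmod w2 = r -> Cmod w3 = r ->
  p / 2 <= Cmod (Cplus (RtoC p) (Cminus (Cmult (RtoC q) (Cmult w1 w2)) w3)).
Proof.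
move=> [hp [hq [hpq [hr [hr1 hr2]]]]] H1 H2 H3.
eapply Rle_trans; last apply Cmod_rev.
rewrite Cmod_RtoC_pos; last lra.
have : Cmod (Cminus (Cmult (RtoC q) (Cmult w1 w2)) w3) <= q * (r * r) + r.
{ unfold Cminus. eapply Rle_trans. apply Cmod_triangle. rewrite Cmod_opp !Cmod_mult H1 H2 H3 Cmod_RtoC_pos; lra. }
have : q * (r * r) <= r * r by nra.
nra.
Qed.

Lemma Smat_alt p q xi c a : Smat p q xi c a =
  Cmult (Copp (Cmult (xi a) (Cinv (xi c))))
    (Cmult (Cplus (RtoC p) (Cminus (Cmult (RtoC q) (Cmult (xi a) (xi c))) (xi c)))
           (Cinv (Cplus (RtoC p) (Cminus (Cmult (RtoC q) (Cmult (xi a) (xi c))) (xi a))))).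
Proof. reflexivity. Qed.

Lemma Good_opp N r G : Good N r G -> Good N r (fun xi => Copp (G xi)).
Proof.
move=> HG. apply (@Good_ext N r (fun xi => Cmult (RtoC (-1)) (G xi))).
apply Good_mult => //. apply Good_const.
move=> xi _. destruct (G xi). unfold Cmult, Copp, RtoC; cbn [fst snd]. f_equal; ring.
Qed.

Lemma Good_minus N r G1 G2 : Good N r G1 -> Good N r G2 -> Good N r (fun xi => Cminus (G1 xi) (G2 xi)).
Proof. move=> H1 H2. apply Good_plus => //. by apply Good_opp. Qed.

Lemma Good_Smat N p q r c a : Hyp p q r -> (c < N)%N -> (a < N)%N -> Good N r (fun xi => Smat p q xi c a).
Proof.
move=> HP Hc Ha. have HP' := HP. case: HP' => [hp [hq [hpq [hr [hr1 hr2]]]]].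
apply (@Good_ext N r (fun xi => Cmult (Copp (Cmult (xi a) (Cinv (xi c))))
    (Cmult (Cplus (RtoC p) (Cminus (Cmult (RtoC q) (Cmult (xi a) (xi c))) (xi c)))
           (Cinv (Cplus (RtoC p) (Cminus (Cmult (RtoC q) (Cmult (xi a) (xi c))) (xi a))))))); last by [].
apply Good_mult. apply Good_opp. apply Good_mult. by apply Good_coord.
apply (@Good_inv N r _ r) => //. by apply Good_coord. move=> xi D. rewrite D //. lra.
apply Good_mult. apply Good_plus. apply Good_const. apply Good_minus. apply Good_mult. apply Good_const.
apply Good_mult; by apply Good_coord. by apply Good_coord.
apply (@Good_inv N r _ (p/2)). lra.
apply Good_plus. apply Good_const. apply Good_minus. apply Good_mult. apply Good_const.
apply Good_mult; by apply Good_coord. by apply Good_coord.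
move=> xi D. apply (@den_bound p q r) => //; by apply D.
Qed.

Lemma Smat_indep p q xi c a j z : j <> c -> j <> a -> Smat p q (upd xi j z) c a = Smat p q xi c a.
Proof. move=> H1 H2. rewrite !Smat_alt !upd_other //; by auto. Qed.

Lemma GH_Smat N p q r c a : Hyp p q r -> (c < N)%N -> (a < N)%N -> c <> a -> GH N r a (fun xi => Smat p q xi c a).
Proof.
move=> HP Hc Ha Hca. have HP' := HP. case: HP' => [hp [hq [hpq [hr [hr1 hr2]]]]].
apply (@GH_ext N r a (fun xi => Cmult (Cmult (Copp (Cinv (xi c))) (xi a))
  (Cmult (Cplus (Cminus (RtoC p) (xi c)) (Cmult (Cmult (RtoC q) (xi c)) (xi a)))
         (Cinv (Cplus (RtoC p) (Cmult (Cminus (Cmult (RtoC q) (xi c)) (RtoC 1)) (xi a))))))).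
- apply GH_mult. apply GH_mult.
  + apply GH_indep. apply Good_opp. apply (@Good_inv N r _ r) => //. by apply Good_coord. move=> xi D. rewrite D //. lra.
    move=> xi z. by rewrite upd_other.
  + by apply GH_coord.
  + apply GH_mult.
    * apply GH_plus. apply GH_indep. apply Good_minus. apply Good_const. by apply Good_coord.
      move=> xi z. by rewrite upd_other.
      apply GH_mult. apply GH_indep. apply Good_mult. apply Good_const. by apply Good_coord.
      move=> xi z. by rewrite upd_other. by apply GH_coord.
    * apply (@GH_inv_affine N r a _ (p/2)) => //. lra.
      apply Good_plus. apply Good_const. apply Good_mult. apply Good_minus. apply Good_mult. apply Good_const.
      by apply Good_coord. apply Good_const. by apply Good_coord.
      { move=> xi D. have := @den_bound p q r _ _ _ HP (D a Ha) (D c Hc) (D a Ha).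
        have -> : Cplus (RtoC p) (Cmult (Cminus (Cmult (RtoC q) (xi c)) (RtoC 1)) (xi a)) =
          Cplus (RtoC p) (Cminus (Cmult (RtoC q) (Cmult (xi a) (xi c))) (xi a)) by unfold Cminus; ring.
        done. }
      move=> xi D. exists (RtoC p), (Cminus (Cmult (RtoC q) (xi c)) (RtoC 1)). split.
      { move=> E. injection E. lra. }
      split.
      { rewrite Cmod_RtoC_pos; last lra.
        have : Cmod (Cminus (Cmult (RtoC q) (xi c)) (RtoC 1)) <= q * r + 1.
        { unfold Cminus. eapply Rle_trans. apply Cmod_triangle. rewrite Cmod_opp Cmod_mult Cmod_1 D // Cmod_RtoC_pos; lra. }
        have : q * r <= r by nra.
        have := Cmod_ge_0 (Cminus (Cmult (RtoC q) (xi c)) (RtoC 1)). nra. }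
      move=> z Hz. by rewrite upd_same upd_other.
- move=> xi D. rewrite Smat_alt.
  have hc : xi c <> RtoC 0. { move=> E. have := D c Hc. rewrite E Cmod_0. lra. }
  have hd : Cplus (RtoC p) (Cminus (Cmult (RtoC q) (Cmult (xi a) (xi c))) (xi a)) <> RtoC 0.
  { move=> E. have := @den_bound p q r _ _ _ HP (D a Ha) (D c Hc) (D a Ha). rewrite E Cmod_0. lra. }
  have -> : Cplus (RtoC p) (Cmult (Cminus (Cmult (RtoC q) (xi c)) (RtoC 1)) (xi a)) =
    Cplus (RtoC p) (Cminus (Cmult (RtoC q) (Cmult (xi a) (xi c))) (xi a)) by unfold Cminus; ring.
  field. split => //.
Qed.


Definition Qf (m : nat) (B : Z) (Pf : (nat -> C) -> C) xi := Copp (Cmult (Cpowz (xi m) (B + 1)) (Pf xi)).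
Definition al p (m : nat) (xi : nat -> C) := Cminus (RtoC p) (xi m).
Definition be q (m : nat) (xi : nat -> C) := Cmult (RtoC q) (xi m).
Definition cn p q m n (xi : nat -> C) := Cdiv (Cpow (Copp (be q m xi)) n) (Cpow (al p m xi) n.+1).
Definition X1 (b m : nat) A B Pf xi := Cmult (Cpowz (xi b) (A - 1)) (Qf m B Pf xi).
Definition X2 p q (b m : nat) A B Mn Pf := sumF (iota 0 Mn)
  (fun n xi => Cmult (Cpowz (xi b) (A - 1 + Z.of_nat n)) (Cmult (Cmult (Qf m B Pf xi) (xi m)) (cn p q m n xi))).
Definition X3 p q (b m : nat) A B Mn Pf := sumF (iota 0 Mn)
  (fun n xi => Cmult (Cpowz (xi b) (A + Z.of_nat n)) (Copp (Cmult (Qf m B Pf xi) (cn p q m n xi)))).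
Definition Dd p q (b m : nat) xi := Cplus (al p m xi) (Cmult (be q m xi) (xi b)).
Definition X4 p q (b m : nat) A B Mn Pf xi :=
  Cmult (Cmult (Cmult (Qf m B Pf xi) (Cpowz (xi b) (A - 1))) (Cminus (xi m) (xi b)))
        (Cdiv (Cpow (Copp (Cmult (be q m xi) (xi b))) Mn) (Cmult (Cpow (al p m xi) Mn) (Dd p q b m xi))).

Lemma peval_geom_sum a b' z M :
  peval (geomP a b' M) z = foldr (fun n acc => Cplus (Cmult (Cdiv (Cpow (Copp b') n) (Cpow a n.+1)) (Cpow z n)) acc) (RtoC 0) (iota 0 M).
Proof.
rewrite /geomP. elim: (iota 0 M) => [|n l IH] //. by rewrite map_cons peval_cons IH.
Qed.

Lemma sumF_scal l (f : nat -> (nat -> C) -> C) K xi :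
  foldr (fun n acc => Cplus (Cmult K (f n xi)) acc) (RtoC 0) l = Cmult K (sumF l f xi).
Proof. rewrite /sumF. elim: l => [|n l IH] /=. ring. rewrite IH. ring. Qed.

Lemma sumF_ext l f g xi : (forall n, f n xi = g n xi) -> sumF l f xi = sumF l g xi.
Proof. move=> H. rewrite /sumF. elim: l => [|n l IH] //=. by rewrite IH H. Qed.

Lemma T_decomp p q (b m : nat) A B Mn Pf xi :
  xi b <> RtoC 0 -> xi m <> RtoC 0 -> al p m xi <> RtoC 0 -> Dd p q b m xi <> RtoC 0 ->
  Cmult (Cmult (Cmult (Smat p q xi b m) (Pf xi)) (Cpowz (xi b) A)) (Cpowz (xi m) B) =
  Cplus (Cplus (Cplus (X1 b m A B Pf xi) (X2 p q b m A B Mn Pf xi)) (X3 p q b m A B Mn Pf xi)) (X4 p q b m A B Mn Pf xi).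
Proof.
move=> hu hv ha hD.
set u := xi b. set v := xi m.
have Hg := @geom_id (al p m xi) (be q m xi) u Mn ha hD.
rewrite peval_geom_sum in Hg.
change (Cplus (al p m xi) (Cmult (be q m xi) u)) with (Dd p q b m xi) in Hg.
set S := foldr _ _ _ in Hg.
set Rem := Cdiv _ _ in Hg.
have HS : S = sumF (iota 0 Mn) (fun n xi => Cmult (cn p q m n xi) (Cpow (xi b) n)) xi by [].
have HX2 : X2 p q b m A B Mn Pf xi = Cmult (Cmult (Cmult (Qf m B Pf xi) v) (Cpowz u (A - 1))) S.
{ rewrite HS /X2 -sumF_scal. rewrite /sumF. elim: (iota 0 Mn) => [|n l IH] //=. rewrite IH.
  rewrite Cpowz_add_nat //. f_equal. rewrite /u /v. ring. }
have HX3 : X3 p q b m A B Mn Pf xi = Copp (Cmult (Cmult (Qf m B Pf xi) (Cpowz u A)) S).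
{ rewrite HS /X3. have -> : forall K, Copp (Cmult K (sumF (iota 0 Mn) (fun n xi => Cmult (cn p q m n xi) (Cpow (xi b) n)) xi))
      = Cmult (Copp K) (sumF (iota 0 Mn) (fun n xi => Cmult (cn p q m n xi) (Cpow (xi b) n)) xi) by move=> K; ring.
  rewrite -sumF_scal. rewrite /sumF. elim: (iota 0 Mn) => [|n l IH] //=. rewrite IH.
  rewrite Cpowz_add_nat //. f_equal. rewrite /u. ring. }
rewrite HX2 HX3 /X1 /X4 -/u -/v.
have HA : Cpowz u A = Cmult u (Cpowz u (A - 1)).
{ rewrite -Cpowz_succ //. f_equal. lia. }
have HB : Cpowz v (B + 1) = Cmult v (Cpowz v B) by rewrite Cpowz_succ.
rewrite HA /Qf -/v HB.
have Hinv : Cinv (Dd p q b m xi) = Cplus S Rem.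
{ rewrite -Hg. unfold Cminus. ring. }
have -> : Cdiv (Cpow (Copp (Cmult (be q m xi) u)) Mn) (Cmult (Cpow (al p m xi) Mn) (Dd p q b m xi)) = Rem by [].
rewrite Smat_alt -/u -/v.
have ED : Cplus (RtoC p) (Cminus (Cmult (RtoC q) (Cmult v u)) v) = Dd p q b m xi.
{ rewrite /Dd /al /be -/u -/v. unfold Cminus. ring. }
have EN : Cplus (RtoC p) (Cminus (Cmult (RtoC q) (Cmult v u)) u) = Cplus (Dd p q b m xi) (Cminus v u).
{ rewrite /Dd /al /be -/u -/v. unfold Cminus. ring. }
rewrite ED EN.
have -> : Cmult (Cplus (Dd p q b m xi) (Cminus v u)) (Cinv (Dd p q b m xi)) = Cplus (RtoC 1) (Cmult (Cminus v u) (Cinv (Dd p q b m xi))).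
{ field. exact hD. }
rewrite Hinv. field. exact hu.
Qed.

Lemma Cpow_inv y k : y <> RtoC 0 -> Cinv (Cpow y k) = Cpow (Cinv y) k.
Proof.
move=> hy. elim: k => [|k IH]; cbn [Cpow].
- field.
- rewrite -IH. field. split => //. by apply Cpow_nz.
Qed.

Lemma GH_opp N r j X : GH N r j X -> GH N r j (fun xi => Copp (X xi)).
Proof.
move=> HX. apply (@GH_ext N r j (fun xi => Cmult (RtoC (-1)) (X xi))).
apply GH_mult => //. apply GH_const.
move=> xi _. destruct (X xi). unfold Cmult, Copp, RtoC; cbn [fst snd]. f_equal; ring.
Qed.

Lemma GH_vpow N r m E : (m < N)%N -> (0 <= E)%Z -> GH N r m (fun xi => Cpowz (xi m) E).
Proof.
move=> Hm HE. apply (@GH_ext N r m (fun xi => Cpow (xi m) (Z.to_nat E))).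
apply GH_Cpow. by apply GH_coord.
move=> xi _. by rewrite Cpowz_nonneg.
Qed.

Lemma Good_Cpowz_coord N r j e : 0 < r -> (j < N)%N -> Good N r (fun xi => Cpowz (xi j) e).
Proof.
move=> hr Hj. apply (@Good_Cpowz N r _ e r) => //. by apply Good_coord.
move=> xi D. rewrite D //. lra.
Qed.

Lemma Z_term N r b m L2 L3 H phi e : 0 < r -> Good N r H -> Good N r phi -> (b < N)%N -> b <> m ->
  b \notin L2 ++ m :: L3 -> m \notin L3 ->
  (forall xi z, H (upd xi b z) = H xi) -> (forall xi z, H (upd xi m z) = H xi) ->
  (forall xi z, phi (upd xi b z) = phi xi) -> IndepL phi L3 ->
  (e = (-1)%Z -> GH N r m phi) ->
  Good N r (fun xi => Cmult (Cpowz (xi b) e) (phi xi)) /\ Zp N r b m L2 L3 H (fun xi => Cmult (Cpowz (xi b) e) (phi xi)).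
Proof.
move=> hr HH Hphi Hb Hbm HbL HmL HHb HHm Hphib HphiL He.
have hr' : 0 <= r by lra.
have Gu : Good N r (fun xi => Cpowz (xi b) e) by apply Good_Cpowz_coord.
split. by apply Good_mult.
case: (Z.eq_dec e (-1)) => Hem.
- apply Z_vkill => //.
  + apply GH_mult. apply GH_indep => // xi z. by rewrite upd_other. by apply He.
  + move=> xi j z Hj. rewrite HphiL // upd_other //. move=> E; subst j.
    by move: HbL; rewrite mem_cat inE Hj !orbT.
- by apply Z_ukill.
Qed.

Definition ginv {N} p q (s : 'S_N) (ij : 'I_N * 'I_N) (xi : nat -> C) : C := Smat p q xi (s ij.1) (s ij.2).
Definition gpow {N} (x y : 'I_N -> Z) (s : 'S_N) (j : 'I_N) (xi : nat -> C) : C := Cpowz (xi (s j)) (x j - y (s j) - 1).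
Definition Pl {N} (s : 'S_N) (k i : 'I_N) := [seq ij <- [seq ij <- inv_pos s | ij.2 == k] | ij.1 != i].
Definition Hl {N} (s : 'S_N) (k : 'I_N) := [seq ij <- inv_pos s | ij.2 != k].
Definition Hpl {N} (i k : 'I_N) := [seq j <- [seq j <- enum 'I_N | j != i] | j != k].
Definition Pf {N} p q (s : 'S_N) (k i : 'I_N) xi := Cprod [seq ginv p q s ij xi | ij <- Pl s k i].
Definition Hf {N} p q (x y : 'I_N -> Z) (s : 'S_N) (k i : 'I_N) xi :=
  Cmult (Cprod [seq ginv p q s ij xi | ij <- Hl s k]) (Cprod [seq gpow x y s j xi | j <- Hpl i k]).

Lemma Cprod_nil : Cprod [::] = RtoC 1. Proof. reflexivity. Qed.
Lemma Cprod_cons a l : Cprod (a :: l) = Cmult a (Cprod l). Proof. reflexivity. Qed.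

Lemma Cprod_split (T : Type) (l : seq T) (P : pred T) (g : T -> C) :
  Cprod [seq g x | x <- l] = Cmult (Cprod [seq g x | x <- [seq x <- l | P x]]) (Cprod [seq g x | x <- [seq x <- l | ~~ P x]]).
Proof.
elim: l => [|a l IH]. cbn [map filter]. rewrite !Cprod_nil. ring.
cbn [map filter]. case: (P a); cbn [negb map]; rewrite !Cprod_cons IH; ring.
Qed.

Lemma mem_inv_pos N (s : 'S_N) (ij : 'I_N * 'I_N) : (ij \in inv_pos s) = ((ij.1 < ij.2)%N && (s ij.2 < s ij.1)%N).
Proof.
rewrite /inv_pos mem_filter. case: ((ij.1 < ij.2)%N && (s ij.2 < s ij.1)%N) => //=.
case: ij => a c. apply (@allpairs_f _ _ _ pair); by rewrite mem_enum.
Qed.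

Lemma uniq_inv_pos N (s : 'S_N) : uniq (inv_pos s).
Proof.
rewrite /inv_pos. apply: filter_uniq. apply: allpairs_uniq.
- exact: enum_uniq.
- exact: enum_uniq.
- by move=> [a1 a2] [b1 b2] _ _ /=.
Qed.

Lemma integrand_split N p q (x y : 'I_N -> Z) (s : 'S_N) (i k b m : 'I_N) :
  s i = b -> s k = m -> i != k -> (i < k)%N -> (m < b)%N -> forall xi,
  integrand p q x y s xi =
  Cmult (Cmult (Cmult (Cmult (Smat p q xi b m) (Pf p q s k i xi)) (Cpowz (xi b) (x i - y b - 1))) (Cpowz (xi m) (x k - y m - 1)))
        (Hf p q x y s k i xi).
Proof.
move=> Hsi Hsk Hik Hlt Hmb xi.
rewrite /integrand /Asig.
change [seq Smat p q xi (s ij.1) (s ij.2) | ij <- inv_pos s] with [seq ginv p q s ij xi | ij <- inv_pos s].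
change [seq Cpowz (xi (s j)) (x j - y (s j) - 1) | j <- enum 'I_N] with [seq gpow x y s j xi | j <- enum 'I_N].
rewrite (@Cprod_split _ (inv_pos s) (fun ij => ij.2 == k)).
rewrite (@Cprod_split _ [seq ij <- inv_pos s | ij.2 == k] (fun ij => ij.1 == i)).
have -> : [seq ij <- [seq ij <- inv_pos s | ij.2 == k] | ij.1 == i] = [:: (i, k)].
{ rewrite -filter_predI. rewrite (@eq_filter _ _ (pred1 (i, k))).
  - apply filter_pred1_uniq. apply uniq_inv_pos. rewrite mem_inv_pos /= Hlt /= Hsi Hsk. exact Hmb.
  - move=> [a c] /=. by rewrite xpair_eqE andbC. }
rewrite (@Cprod_split _ (enum 'I_N) (fun j => j == i)).
rewrite (@Cprod_split _ [seq j <- enum 'I_N | j != i] (fun j => j == k)).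
have -> : [seq j <- enum 'I_N | j == i] = [:: i].
{ apply: filter_pred1_uniq. exact: enum_uniq. by rewrite mem_enum. }
have -> : [seq j <- [seq j <- enum 'I_N | j != i] | j == k] = [:: k].
{ apply: filter_pred1_uniq. apply: filter_uniq. exact: enum_uniq.
  rewrite mem_filter mem_enum andbT. by rewrite eq_sym. }
rewrite /Hf /Pf /Pl /Hl /Hpl. cbn [map]. rewrite !Cprod_cons !Cprod_nil.
rewrite /ginv /gpow /=. rewrite Hsi Hsk. ring.
Qed.

Lemma al_bound p q r (m : nat) xi : Hyp p q r -> Cmod (xi m) = r -> p / 2 <= Cmod (al p m xi).
Proof.
move=> [hp [hq [hpq [hr [hr1 hr2]]]]] H. rewrite /al. unfold Cminus.
eapply Rle_trans; last apply Cmod_rev. rewrite Cmod_opp H Cmod_RtoC_pos; lra.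
Qed.

Lemma Dd_eq p q (b m : nat) xi : Dd p q b m xi = Cplus (RtoC p) (Cminus (Cmult (RtoC q) (Cmult (xi m) (xi b))) (xi m)).
Proof. rewrite /Dd /al /be. unfold Cminus. ring. Qed.

Lemma Dd_bound N p q r (b m : nat) xi : Hyp p q r -> (b < N)%N -> (m < N)%N -> Dom N r xi -> p / 2 <= Cmod (Dd p q b m xi).
Proof. move=> HP hb hm D. rewrite Dd_eq. apply: (@den_bound p q r) => //; by apply D. Qed.

Lemma Good_al N p r (m : nat) : (m < N)%N -> Good N r (al p m).
Proof. move=> hm. apply Good_minus. apply Good_const. by apply Good_coord. Qed.

Lemma Good_cn N p q r (m : nat) n : Hyp p q r -> (m < N)%N -> Good N r (cn p q m n).
Proof.
move=> HP hm. have HP' := HP. case: HP' => [hp [hq [hpq [hr [hr1 hr2]]]]].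
rewrite /cn. apply Good_mult.
- apply Good_Cpow. apply Good_opp. apply Good_mult. apply Good_const. by apply Good_coord.
- apply (@Good_inv N r _ ((p/2) ^ n.+1)). apply pow_lt; lra.
  apply Good_Cpow. by apply Good_al.
  move=> xi D. rewrite Cmod_Cpow. apply pow_incr. split. lra. apply (@al_bound p q r) => //. by apply D.
Qed.

Lemma GH_al_inv N p q r (m : nat) : Hyp p q r -> (m < N)%N -> GH N r m (fun xi => Cinv (al p m xi)).
Proof.
move=> HP hm. have HP' := HP. case: HP' => [hp [hq [hpq [hr [hr1 hr2]]]]].
apply (@GH_inv_affine N r m _ (p/2)) => //. lra. by apply Good_al.
- move=> xi D. apply (@al_bound p q r) => //. by apply D.
- move=> xi D. exists (RtoC p), (RtoC (-1)). split. { move=> E. injection E. lra. }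
  split. rewrite (Cmod_RtoC_pos p); last lra. rewrite Cmod_R Rabs_Ropp Rabs_R1. lra.
  move=> z _. rewrite /al upd_same. unfold Cminus. destruct z. unfold Cplus, Cmult, Copp, RtoC; cbn [fst snd]. f_equal; ring.
Qed.

Lemma Good_Qf N r (m : nat) B Pf : 0 < r -> (m < N)%N -> Good N r Pf -> Good N r (Qf m B Pf).
Proof. move=> hr hm GP. apply Good_opp. apply Good_mult => //. by apply Good_Cpowz_coord. Qed.

Lemma Qf_indep_b (b m : nat) B Pf : b <> m -> (forall xi z, Pf (upd xi b z) = Pf xi) ->
  forall xi z, Qf m B Pf (upd xi b z) = Qf m B Pf xi.
Proof. move=> hbm Pfb xi z. rewrite /Qf Pfb upd_other //. by auto. Qed.

Lemma Qf_indepL (m : nat) B Pf L3 : m \notin L3 -> IndepL Pf L3 -> IndepL (Qf m B Pf) L3.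
Proof.
move=> HmL PfL xi j z Hj. rewrite /Qf PfL // upd_other //. move=> E; subst j. by rewrite Hj in HmL.
Qed.

Lemma cn_indep_b p q (b m : nat) n : b <> m -> forall xi z, cn p q m n (upd xi b z) = cn p q m n xi.
Proof. move=> hbm xi z. rewrite /cn /al /be upd_other //. by auto. Qed.

Lemma cn_indepL p q (m : nat) n L3 : m \notin L3 -> IndepL (cn p q m n) L3.
Proof.
move=> HmL xi j z Hj. rewrite /cn /al /be upd_other //. move=> E; subst j. by rewrite Hj in HmL.
Qed.

Lemma coord_indepL (m : nat) L3 : m \notin L3 -> IndepL (fun xi => xi m) L3.
Proof. move=> HmL xi j z Hj. rewrite upd_other //. move=> E; subst j. by rewrite Hj in HmL. Qed.

Lemma piece1 N p q r (b m : nat) L2 L3 A B Pf H :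
  Hyp p q r -> (b < N)%N -> (m < N)%N -> b <> m -> b \notin L2 ++ m :: L3 -> m \notin L3 ->
  Good N r Pf -> GH N r m Pf -> (forall xi z, Pf (upd xi b z) = Pf xi) -> IndepL Pf L3 ->
  Good N r H -> (forall xi z, H (upd xi b z) = H xi) -> (forall xi z, H (upd xi m z) = H xi) ->
  (A = 0%Z -> (0 <= B + 1)%Z) ->
  Good N r (X1 b m A B Pf) /\ Zp N r b m L2 L3 H (X1 b m A B Pf).
Proof.
move=> HP hb hm hbm HbL HmL GP GHP Pfb PfL GH0 Hb Hm Hc.
have hr : 0 < r by case: HP => [_ [_ [_ [hr _]]]].
apply Z_term => //.
- by apply Good_Qf.
- by apply Qf_indep_b.
- by apply Qf_indepL.
- move=> HA. have HB : (0 <= B + 1)%Z by apply Hc; lia.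
  apply GH_opp. apply GH_mult => //. by apply GH_vpow.
Qed.

Lemma phi2_eq p q (m : nat) B Pf n xi : xi m <> RtoC 0 -> al p m xi <> RtoC 0 ->
  Cmult (Cmult (Qf m B Pf xi) (xi m)) (cn p q m n xi) =
  Copp (Cmult (Cmult (Cmult (Cpowz (xi m) (B + 1 + Z.of_nat n.+1)) (Pf xi)) (Cpow (Copp (RtoC q)) n))
      (Cpow (Cinv (al p m xi)) n.+1)).
Proof.
move=> hv ha. rewrite /Qf /cn /be Cpowz_add_nat //.
have -> : Copp (Cmult (RtoC q) (xi m)) = Cmult (Copp (RtoC q)) (xi m) by ring.
rewrite Cpow_mult -Cpow_inv //. cbn [Cpow]. field. split => //. by apply Cpow_nz.
Qed.

Lemma phi3_eq p q (m : nat) B Pf n xi : xi m <> RtoC 0 -> al p m xi <> RtoC 0 ->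
  Copp (Cmult (Qf m B Pf xi) (cn p q m n xi)) =
  Cmult (Cmult (Cmult (Cpowz (xi m) (B + 1 + Z.of_nat n)) (Pf xi)) (Cpow (Copp (RtoC q)) n))
      (Cpow (Cinv (al p m xi)) n.+1).
Proof.
move=> hv ha. rewrite /Qf /cn /be Cpowz_add_nat //.
have -> : Copp (Cmult (RtoC q) (xi m)) = Cmult (Copp (RtoC q)) (xi m) by ring.
rewrite Cpow_mult -Cpow_inv //. cbn [Cpow]. field. split => //. by apply Cpow_nz.
Qed.

Lemma Dom_nz N r xi (j : nat) : 0 < r -> (j < N)%N -> Dom N r xi -> xi j <> RtoC 0.
Proof. move=> hr hj D E. have := D j hj. rewrite E Cmod_0. lra. Qed.

Lemma al_nz N p q r (m : nat) xi : Hyp p q r -> (m < N)%N -> Dom N r xi -> al p m xi <> RtoC 0.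
Proof.
move=> HP hm D E. have := @al_bound p q r m xi HP (D m hm). rewrite E Cmod_0.
case: HP => [hp _]. lra.
Qed.

Lemma piece2 N p q r (b m : nat) L2 L3 A B Mn Pf H :
  Hyp p q r -> (b < N)%N -> (m < N)%N -> b <> m -> b \notin L2 ++ m :: L3 -> m \notin L3 ->
  Good N r Pf -> GH N r m Pf -> (forall xi z, Pf (upd xi b z) = Pf xi) -> IndepL Pf L3 ->
  Good N r H -> (forall xi z, H (upd xi b z) = H xi) -> (forall xi z, H (upd xi m z) = H xi) ->
  (forall n : nat, (A - 1 + Z.of_nat n = -1)%Z -> (0 <= B + 1 + Z.of_nat n.+1)%Z) ->
  Good N r (X2 p q b m A B Mn Pf) /\ Zp N r b m L2 L3 H (X2 p q b m A B Mn Pf).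
Proof.
move=> HP hb hm hbm HbL HmL GP GHP Pfb PfL GH0 Hb Hm Hc.
have hr : 0 < r by case: HP => [_ [_ [_ [hr _]]]].
have HT : forall n, Good N r (fun xi => Cmult (Cpowz (xi b) (A - 1 + Z.of_nat n)) (Cmult (Cmult (Qf m B Pf xi) (xi m)) (cn p q m n xi)))
   /\ Zp N r b m L2 L3 H (fun xi => Cmult (Cpowz (xi b) (A - 1 + Z.of_nat n)) (Cmult (Cmult (Qf m B Pf xi) (xi m)) (cn p q m n xi))).
{ move=> n. apply Z_term => //.
  - apply Good_mult. apply Good_mult. by apply Good_Qf. by apply Good_coord. by apply Good_cn.
  - move=> xi z. rewrite Qf_indep_b // cn_indep_b // upd_other //. by auto.
  - move=> xi j z Hj. rewrite (@Qf_indepL m B Pf L3 HmL PfL) // (@cn_indepL p q m n L3 HmL) // (@coord_indepL m L3 HmL) //.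
  - move=> HA. have HE := Hc n HA.
    apply (@GH_ext N r m (fun xi => Copp (Cmult (Cmult (Cmult (Cpowz (xi m) (B + 1 + Z.of_nat n.+1)) (Pf xi)) (Cpow (Copp (RtoC q)) n))
      (Cpow (Cinv (al p m xi)) n.+1)))).
    + apply GH_opp. apply GH_mult. apply GH_mult. apply GH_mult => //. by apply GH_vpow.
      apply GH_const. apply GH_Cpow. by apply (@GH_al_inv N p q r).
    + move=> xi D. rewrite phi2_eq //. exact (@Dom_nz N r xi m hr hm D). by apply (@al_nz N p q r). }
split.
- apply Good_sumF => n _. apply HT.
- apply Z_sumF; [lra | done | move=> n _; apply HT].
Qed.

Lemma piece3 N p q r (b m : nat) L2 L3 A B Mn Pf H :
  Hyp p q r -> (b < N)%N -> (m < N)%N -> b <> m -> b \notin L2 ++ m :: L3 -> m \notin L3 ->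
  Good N r Pf -> GH N r m Pf -> (forall xi z, Pf (upd xi b z) = Pf xi) -> IndepL Pf L3 ->
  Good N r H -> (forall xi z, H (upd xi b z) = H xi) -> (forall xi z, H (upd xi m z) = H xi) ->
  (forall n : nat, (A + Z.of_nat n = -1)%Z -> (0 <= B + 1 + Z.of_nat n)%Z) ->
  Good N r (X3 p q b m A B Mn Pf) /\ Zp N r b m L2 L3 H (X3 p q b m A B Mn Pf).
Proof.
move=> HP hb hm hbm HbL HmL GP GHP Pfb PfL GH0 Hb Hm Hc.
have hr : 0 < r by case: HP => [_ [_ [_ [hr _]]]].
have HT : forall n, Good N r (fun xi => Cmult (Cpowz (xi b) (A + Z.of_nat n)) (Copp (Cmult (Qf m B Pf xi) (cn p q m n xi))))
   /\ Zp N r b m L2 L3 H (fun xi => Cmult (Cpowz (xi b) (A + Z.of_nat n)) (Copp (Cmult (Qf m B Pf xi) (cn p q m n xi)))).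
{ move=> n. apply Z_term => //.
  - apply Good_opp. apply Good_mult. by apply Good_Qf. by apply Good_cn.
  - move=> xi z. by rewrite Qf_indep_b // cn_indep_b.
  - move=> xi j z Hj. by rewrite (@Qf_indepL m B Pf L3 HmL PfL) // (@cn_indepL p q m n L3 HmL).
  - move=> HA. have HE := Hc n HA.
    apply (@GH_ext N r m (fun xi => Cmult (Cmult (Cmult (Cpowz (xi m) (B + 1 + Z.of_nat n)) (Pf xi)) (Cpow (Copp (RtoC q)) n))
      (Cpow (Cinv (al p m xi)) n.+1))).
    + apply GH_mult. apply GH_mult. apply GH_mult => //. by apply GH_vpow.
      apply GH_const. apply GH_Cpow. by apply (@GH_al_inv N p q r).
    + move=> xi D. rewrite phi3_eq //. exact (@Dom_nz N r xi m hr hm D). by apply (@al_nz N p q r). }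
split.
- apply Good_sumF => n _. apply HT.
- apply Z_sumF; [lra | done | move=> n _; apply HT].
Qed.

Lemma GH_Dd_inv N p q r (b m : nat) : Hyp p q r -> (b < N)%N -> (m < N)%N -> b <> m ->
  GH N r m (fun xi => Cinv (Dd p q b m xi)).
Proof.
move=> HP hb hm hbm. have HP' := HP. case: HP' => [hp [hq [hpq [hr [hr1 hr2]]]]].
apply (@GH_inv_affine N r m _ (p/2)) => //. lra.
- rewrite /Dd. apply Good_plus. by apply Good_al. apply Good_mult. apply Good_mult. apply Good_const.
  by apply Good_coord. by apply Good_coord.
- move=> xi D. by apply (@Dd_bound N p q r).
- move=> xi D. exists (RtoC p), (Cminus (Cmult (RtoC q) (xi b)) (RtoC 1)). split.
  { move=> E. injection E. lra. }
  split.
  { rewrite (Cmod_RtoC_pos p); last lra.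
    have : Cmod (Cminus (Cmult (RtoC q) (xi b)) (RtoC 1)) <= q * r + 1.
    { unfold Cminus. eapply Rle_trans. apply Cmod_triangle. rewrite Cmod_opp Cmod_mult Cmod_1 D // Cmod_RtoC_pos; lra. }
    have : q * r <= r by nra.
    have := Cmod_ge_0 (Cminus (Cmult (RtoC q) (xi b)) (RtoC 1)). nra. }
  move=> z _. rewrite /Dd /al /be upd_same upd_other //. unfold Cminus. ring.
Qed.

Lemma X4_eq p q (b m : nat) A B Mn Pf xi : xi m <> RtoC 0 -> al p m xi <> RtoC 0 -> Dd p q b m xi <> RtoC 0 ->
  X4 p q b m A B Mn Pf xi =
  Copp (Cmult (Cmult (Cmult (Cmult (Cmult (Cmult (Cpowz (xi m) (B + 1 + Z.of_nat Mn)) (Pf xi)) (Cpowz (xi b) (A - 1)))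
     (Cminus (xi m) (xi b))) (Cpow (Copp (Cmult (RtoC q) (xi b))) Mn)) (Cpow (Cinv (al p m xi)) Mn)) (Cinv (Dd p q b m xi))).
Proof.
move=> hv ha hD. rewrite /X4 /Qf /be Cpowz_add_nat //.
have -> : Copp (Cmult (Cmult (RtoC q) (xi m)) (xi b)) = Cmult (Copp (Cmult (RtoC q) (xi b))) (xi m) by ring.
rewrite Cpow_mult -Cpow_inv //. field. repeat split => //. by apply Cpow_nz.
Qed.

Lemma piece4 N p q r (b m : nat) L2 L3 A B Mn Pf H :
  Hyp p q r -> (b < N)%N -> (m < N)%N -> b <> m -> m \notin L3 -> b \notin L3 ->
  GH N r m Pf -> IndepL Pf L3 ->
  Good N r H -> (forall xi z, H (upd xi m z) = H xi) ->
  (0 <= B + 1 + Z.of_nat Mn)%Z ->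
  Good N r (X4 p q b m A B Mn Pf) /\ Zp N r b m L2 L3 H (X4 p q b m A B Mn Pf).
Proof.
move=> HP hb hm hbm HmL HbL3 GHP PfL GH0 Hm Hc.
have hr : 0 < r by case: HP => [_ [_ [_ [hr _]]]].
have GX : GH N r m (X4 p q b m A B Mn Pf).
{ apply (@GH_ext N r m (fun xi => Copp (Cmult (Cmult (Cmult (Cmult (Cmult (Cmult (Cpowz (xi m) (B + 1 + Z.of_nat Mn)) (Pf xi)) (Cpowz (xi b) (A - 1)))
     (Cminus (xi m) (xi b))) (Cpow (Copp (Cmult (RtoC q) (xi b))) Mn)) (Cpow (Cinv (al p m xi)) Mn)) (Cinv (Dd p q b m xi))))).
  - apply GH_opp. apply GH_mult. apply GH_mult. apply GH_mult. apply GH_mult. apply GH_mult. apply GH_mult.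
    + by apply GH_vpow.
    + done.
    + apply GH_indep. by apply Good_Cpowz_coord. move=> xi z. by rewrite upd_other.
    + apply GH_plus. by apply GH_coord. apply GH_indep. apply Good_opp. by apply Good_coord.
      move=> xi z. by rewrite upd_other.
    + apply GH_indep. apply Good_Cpow. apply Good_opp. apply Good_mult. apply Good_const. by apply Good_coord.
      move=> xi z. by rewrite upd_other.
    + apply GH_Cpow. by apply (@GH_al_inv N p q r).
    + by apply (@GH_Dd_inv N p q r).
  - move=> xi D. rewrite X4_eq //. exact (@Dom_nz N r xi m hr hm D). by apply (@al_nz N p q r).
    move=> E. have := @Dd_bound N p q r b m xi HP hb hm D. rewrite E Cmod_0. case: HP => [hp _]. lra. }
split. by case: GX.
apply Z_vkill => //.
move=> xi j z Hj. have hjm : j <> m. { move=> E; subst j. by rewrite Hj in HmL. }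
have hjb : j <> b. { move=> E; subst j. by rewrite Hj in HbL3. }
have hmj : m <> j by auto. have hbj : b <> j by auto.
rewrite /X4 /Qf /Dd /al /be !(upd_other _ _ _ _ hmj) !(upd_other _ _ _ _ hbj) PfL //.
Qed.

Lemma In_mem (T : eqType) (x : T) (l : seq T) : List.In x l -> x \in l.
Proof. elim: l => [|a l IH] //= [->|H]. by rewrite inE eqxx. by rewrite inE IH ?orbT. Qed.

Lemma rev_iota_split (N m b : nat) : (m < b)%N -> (b < N)%N ->
  rev (iota 0 N) = rev (iota b.+1 (N - b.+1)) ++ b :: rev (iota m.+1 (b - m.+1)) ++ m :: rev (iota 0 m).
Proof.
move=> hmb hbN.
have E : N = (m + (1 + ((b - m.+1) + (1 + (N - b.+1)))))%N by lia.
rewrite {1}E !iotaD !add0n.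
have -> : (m + 1 + (b - m.+1))%N = b by lia.
have -> : (m + 1)%N = m.+1 by lia.
have -> : (b + 1)%N = b.+1 by lia.
rewrite !rev_cat /=. rewrite -!catA. done.
Qed.

Lemma main_vanish N p q (x y : 'I_N -> Z) (s : 'S_N) (i k b m : 'I_N) r :
  0 < p -> 0 < q -> p + q = 1 -> 0 < r -> r <= p / 4 -> r <= 1/2 ->
  s i = b -> s k = m -> (i < k)%N -> (m < b)%N ->
  (forall j1 j2 : 'I_N, (j1 < j2)%N -> (s j2 < s j1)%N -> j1 = i -> j2 = k) ->
  (forall j1 j2 : 'I_N, (j1 < j2)%N -> (s j2 < s j1)%N -> j1 <> k) ->
  (forall j1 j2 : 'I_N, (j1 < j2)%N -> (s j2 < s j1)%N -> j2 <> i) ->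
  (x i <= x k)%Z -> (y m <= y b)%Z ->
  Isig p q x y s r = RtoC 0.
Proof.
move=> hp hq hpq hr hr1 hr2 Hsi Hsk Hik Hmb Hinv1 Hinv2 Hinv3 Hx Hy.
have HP : Hyp p q r by repeat split.
have hr' : 0 <= r by lra.
set bn := nat_of_ord b. set mn := nat_of_ord m.
have hbN : (bn < N)%N by apply ltn_ord.
have hmN : (mn < N)%N by apply ltn_ord.
have hbm : bn <> mn. { move=> E. have H0 : (mn < bn)%N by exact Hmb. by rewrite E ltnn in H0. }
have hik : i != k. { apply/eqP => E. by rewrite E ltnn in Hik. }
have valb : forall a : 'I_N, (s a : nat) = bn -> a = i.
{ move=> a E. apply: (perm_inj (s := s)). rewrite Hsi. by apply val_inj. }
have valm : forall a : 'I_N, (s a : nat) = mn -> a = k.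
{ move=> a E. apply: (perm_inj (s := s)). rewrite Hsk. by apply val_inj. }
set L3 := rev (iota 0 mn). set L2 := rev (iota mn.+1 (bn - mn.+1)). set L1 := rev (iota bn.+1 (N - bn.+1)).
have memL3 : forall j, (j \in L3) = (j < mn)%N. { move=> j. by rewrite /L3 mem_rev mem_iota add0n. }
have memL2 : forall j, j \in L2 -> (j < bn)%N.
{ move=> j. rewrite /L2 mem_rev mem_iota => /andP [_ H]. move: H. have -> : (mn.+1 + (bn - mn.+1))%N = bn by lia. done. }
have HbL : bn \notin L2 ++ mn :: L3.
{ rewrite mem_cat inE negb_or. apply/andP; split.
  - apply/negP => /memL2. by rewrite ltnn.
  - rewrite negb_or memL3. apply/andP; split. apply/eqP. done. rewrite -leqNgt. by apply ltnW. }
have HmL : mn \notin L3 by rewrite memL3 ltnn.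
have HbL3 : bn \notin L3. { rewrite memL3 -leqNgt. by apply ltnW. }
set PF := Pf p q s k i. set HF := Hf p q x y s k i.
have memPl : forall ij, ij \in Pl s k i -> [/\ ij.2 = k, ij.1 <> i & (mn < s ij.1)%N].
{ move=> ij. rewrite /Pl mem_filter mem_filter mem_inv_pos => /andP [H1 /andP [/eqP H2 /andP [H3 H4]]].
  split => //. by apply/eqP. move: H4. by rewrite H2 Hsk. }
have memHl : forall ij, ij \in Hl s k -> [/\ (s ij.1 : nat) <> bn, (s ij.1 : nat) <> mn, (s ij.2 : nat) <> bn & (s ij.2 : nat) <> mn].
{ move=> ij. rewrite /Hl mem_filter mem_inv_pos => /andP [/eqP H1 /andP [H3 H4]].
  split.
  - move=> /valb E. apply H1. by apply: (Hinv1 _ _ H3 H4).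
  - move=> /valm E. by apply: (Hinv2 _ _ H3 H4).
  - move=> /valb E. by apply: (Hinv3 _ _ H3 H4).
  - move=> /valm E. by apply H1. }
have memHpl : forall j, j \in Hpl i k -> (s j : nat) <> bn /\ (s j : nat) <> mn.
{ move=> j. rewrite /Hpl !mem_filter => /andP [/eqP H1 /andP [/eqP H2 _]].
  split. by move=> /valb. by move=> /valm. }
have GP : Good N r PF.
{ apply Good_Cprod => ij _. rewrite /ginv. apply Good_Smat => //; apply ltn_ord. }
have GHP : GH N r mn PF.
{ apply GH_Cprod => ij /In_mem /memPl [E1 E2 E3]. rewrite /ginv.
  have E : (s ij.2 : nat) = mn by rewrite E1 Hsk.
  rewrite E. apply GH_Smat => //; try apply ltn_ord. move=> E4. by rewrite E4 ltnn in E3. }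
have Pfb : forall xi z, PF (upd xi bn z) = PF xi.
{ move=> xi z. rewrite /PF /Pf. congr Cprod. apply eq_in_map => ij /memPl [E1 E2 E3].
  rewrite /ginv Smat_indep //. move=> E. apply E2. by apply valb. rewrite E1 Hsk. done. }
have PfL : IndepL PF L3.
{ move=> xi j z Hj. rewrite memL3 in Hj. rewrite /PF /Pf. congr Cprod. apply eq_in_map => ij /memPl [E1 E2 E3].
  rewrite /ginv Smat_indep //.
  - move=> E. subst j. have := ltn_trans Hj E3. by rewrite ltnn.
  - rewrite E1 Hsk. move=> E. subst j. by rewrite ltnn in Hj. }
have GH0 : Good N r HF.
{ apply Good_mult. apply Good_Cprod => ij _. rewrite /ginv. apply Good_Smat => //; apply ltn_ord.
  apply Good_Cprod => j _. rewrite /gpow. apply Good_Cpowz_coord => //. }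
have Hbind : forall xi z, HF (upd xi bn z) = HF xi.
{ move=> xi z. rewrite /HF /Hf. congr Cmult; congr Cprod.
  - apply eq_in_map => ij /memHl [E1 E2 E3 E4]. rewrite /ginv Smat_indep //; by auto.
  - apply eq_in_map => j /memHpl [E1 E2]. rewrite /gpow upd_other //. }
have Hmind : forall xi z, HF (upd xi mn z) = HF xi.
{ move=> xi z. rewrite /HF /Hf. congr Cmult; congr Cprod.
  - apply eq_in_map => ij /memHl [E1 E2 E3 E4]. rewrite /ginv Smat_indep //; by auto.
  - apply eq_in_map => j /memHpl [E1 E2]. rewrite /gpow upd_other //. }
set A := (x i - y b - 1)%Z. set B := (x k - y m - 1)%Z. set Mn := Z.to_nat (- (B + 1)).
have P1 := @piece1 N p q r bn mn L2 L3 A B PF HF HP hbN hmN hbm HbL HmL GP GHP Pfb PfL GH0 Hbind Hmind ltac:(rewrite /A /B; lia).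
have P2 := @piece2 N p q r bn mn L2 L3 A B Mn PF HF HP hbN hmN hbm HbL HmL GP GHP Pfb PfL GH0 Hbind Hmind ltac:(rewrite /A /B; lia).
have P3 := @piece3 N p q r bn mn L2 L3 A B Mn PF HF HP hbN hmN hbm HbL HmL GP GHP Pfb PfL GH0 Hbind Hmind ltac:(rewrite /A /B; lia).
have P4 := @piece4 N p q r bn mn L2 L3 A B Mn PF HF HP hbN hmN hbm HmL HbL3 GHP PfL GH0 Hmind ltac:(rewrite /Mn /B; lia).
have ZT : Zp N r bn mn L2 L3 HF (fun xi => Cmult (Cmult (Cmult (Smat p q xi bn mn) (PF xi)) (Cpowz (xi bn) A)) (Cpowz (xi mn) B)).
{ apply (@Z_ext N r bn mn L2 L3 HF (fun xi => Cplus (Cplus (Cplus (X1 bn mn A B PF xi) (X2 p q bn mn A B Mn PF xi)) (X3 p q bn mn A B Mn PF xi)) (X4 p q bn mn A B Mn PF xi))) => //.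
  - case: P1 => G1 Z1. case: P2 => G2 Z2. case: P3 => G3 Z3. case: P4 => G4 Z4.
    apply Z_plus => //. apply Good_plus => //. by apply Good_plus.
    apply Z_plus => //. by apply Good_plus.
    by apply Z_plus.
  - move=> xi D. rewrite (@T_decomp p q bn mn A B Mn PF xi) //.
    + exact (@Dom_nz N r xi bn hr hbN D).
    + exact (@Dom_nz N r xi mn hr hmN D).
    + exact (@al_nz N p q r mn xi HP hmN D).
    + move=> E. have := @Dd_bound N p q r bn mn xi HP hbN hmN D. rewrite E Cmod_0. lra. }
rewrite /Isig.
set xi1 : nat -> C := fun j => if (j < N)%N then RtoC r else RtoC 0.
have D1 : Dom N r xi1. { move=> j hj. rewrite /xi1 hj Cmod_RtoC_pos //. }
rewrite (@circ_iter_agree r (rev (iota 0 N)) _ (fun _ => RtoC 0) xi1).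
2:{ move=> j. rewrite mem_rev mem_iota add0n /= /xi1. by case: (j < N)%N. }
rewrite (@rev_iota_split N mn bn Hmb hbN) circ_iter_cat.
apply (@circ_iter_zero N) => // xi D.
have -> : integrand p q x y s = (fun xi => Cmult (Cmult (Cmult (Cmult (Smat p q xi bn mn) (PF xi)) (Cpowz (xi bn) A)) (Cpowz (xi mn) B)) (HF xi)).
{ apply functional_extensionality => xi'. by rewrite (@integrand_split N p q x y s i k b m Hsi Hsk hik Hik Hmb). }
by apply ZT.
Qed.

Theorem lemma3p3 (N : nat) (p q : R) (x y : 'I_N -> Z) (s : 'S_N) :
  (2 <= N)%N -> 0 < p -> 0 < q -> p + q = 1 ->
  (forall i j : 'I_N, (i <= j)%N -> (x i <= x j)%Z) ->
  (forall i j : 'I_N, (i <= j)%N -> (y i <= y j)%Z) ->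
  (exists (b i : 'I_N), i.+1 = b /\ s i = b /\
      forall j : 'I_N, (j < i)%N -> (s j < b)%N) ->
  exists r0 : R, 0 < r0 /\
    forall r : R, 0 < r -> r < r0 -> Isig p q x y s r = RtoC 0.
Proof.
move=> hN hp hq hpq Hxm Hym [b [i [Hib [Hsi Hbef]]]].
exists (Rmin (p / 4) (1 / 2)). split.
{ apply Rmin_glb_lt; lra. }
move=> r hr hr0.
have hr1 : r <= p / 4. { have := Rmin_l (p/4) (1/2). lra. }
have hr2 : r <= 1 / 2. { have := Rmin_r (p/4) (1/2). lra. }
set sn : nat -> nat := fun j => nat_of_ord (s (insubd i j)).
have snE : forall j : 'I_N, sn j = s j.
{ move=> j. rewrite /sn. congr (nat_of_ord (s _)). apply val_inj. by rewrite val_insubd ltn_ord. }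
have sn_inj : {in [pred j | (j < N)%N] &, injective sn}.
{ move=> j1 j2 H1 H2 E. rewrite /sn in E.
  have E2 := val_inj E. have E3 := perm_inj E2.
  have := f_equal val E3. rewrite !val_insubd. rewrite inE in H1. rewrite inE in H2. by rewrite H1 H2. }
have hbN : (b < N)%N by apply ltn_ord.
have hiN : (i < N)%N by apply ltn_ord.
set vals := map sn (iota 0 i).
have uvals : uniq vals.
{ rewrite map_inj_in_uniq. apply iota_uniq.
  move=> j1 j2 H1 H2. apply sn_inj; rewrite inE; move: H1 H2; rewrite !mem_iota add0n => /andP [_ H1] /andP [_ H2];
  apply: (ltn_trans _ hiN) => //. }
have valsb : forall v, v \in vals -> (v < b)%N.
{ move=> v /mapP [j Hj ->]. rewrite mem_iota add0n in Hj.
  have Hj' : (j < N)%N by apply: (ltn_trans _ hiN).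
  have := Hbef (Ordinal Hj') Hj. rewrite -snE. done. }
have [v Hv Hvn] : exists2 v, v \in iota 0 b & v \notin vals.
{ apply/hasP. case: (boolP (has (fun v => v \notin vals) (iota 0 b))) => // /hasPn Hn. exfalso.
  have Hsub : {subset iota 0 b <= vals}.
  { move=> v Hv. have := Hn v Hv. by move=> /negPn. }
  have := uniq_leq_size (iota_uniq 0 b) Hsub. rewrite size_iota size_map size_iota -Hib. by rewrite ltnn. }
rewrite mem_iota add0n in Hv.
have hvN : (v < N)%N by apply: (ltn_trans Hv).
set m : 'I_N := Ordinal hvN.
set k : 'I_N := (s^-1)%g m.
have Hsk : s k = m by rewrite /k permKV.
have Hki : (i < k)%N.
{ rewrite ltnNge leq_eqVlt. apply/negP => /orP [/eqP E|E].
  - have E2 : k = i by apply val_inj. rewrite E2 Hsi in Hsk.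
    have E3 : nat_of_ord b = v by rewrite Hsk.
    rewrite -E3 in Hv. by rewrite ltnn in Hv.
  - apply/negP: Hvn. apply/negPn. apply/mapP. exists (nat_of_ord k). by rewrite mem_iota add0n.
    by rewrite snE Hsk. }
have Hmb : (m < b)%N by [].
have Hk : forall j : 'I_N, (i < j)%N -> (s j < b)%N -> j = k.
{ move=> j Hj Hsj. apply/eqP. apply/negP => /negP Hjk.
  have Hl : uniq (nat_of_ord (s j) :: v :: vals).
  { rewrite /= uvals andbT. apply/andP; split.
    - rewrite inE negb_or. apply/andP; split.
      + apply/eqP => E. apply/negP: Hjk. apply/negPn/eqP. apply: (perm_inj (s := s)). rewrite Hsk. by apply val_inj.
      + apply/negP => /mapP [j' Hj' E]. rewrite mem_iota add0n in Hj'.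
        have Hj'N : (j' < N)%N by apply: (ltn_trans _ hiN).
        have E2 : s j = s (Ordinal Hj'N) by apply val_inj; rewrite /= E -(snE (Ordinal Hj'N)).
        have E3 := perm_inj E2. have := f_equal val E3. move=> /= E4. rewrite E4 in Hj.
        have := ltn_trans Hj Hj'. by rewrite ltnn.
    - exact Hvn. }
  have Hsub : {subset (nat_of_ord (s j) :: v :: vals) <= iota 0 b}.
  { move=> w. rewrite !inE mem_iota add0n => /orP [/eqP ->|/orP [/eqP ->|Hw]] //. by apply valsb. }
  have := uniq_leq_size Hl Hsub. rewrite /= size_map !size_iota -Hib. by rewrite ltnS ltnn. }
apply (@main_vanish N p q x y s i k b m r) => //.
- move=> j1 j2 H12 Hs E. subst j1. apply Hk. done. by rewrite -Hsi.
- move=> j1 j2 H12 Hs E. subst j1. have Hj2 : (i < j2)%N by apply: (ltn_trans Hki).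
  have := Hk j2 Hj2. rewrite Hsk in Hs. move=> H. have E := H (ltn_trans Hs Hmb). subst j2.
  by rewrite ltnn in H12.
- move=> j1 j2 H12 Hs E. subst j2. have := Hbef j1 H12. rewrite Hsi in Hs. rewrite ltnNge.
  move=> /negP; apply. by apply ltnW.
- apply Hxm. by apply ltnW.
- apply Hym. by apply ltnW.
Qed.
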